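(* Let $G$ be an open localic groupoid, $Q=\mathcal O(G)$ its groupoid quantale with base locale $A=\mathcal O(G_0)$, and let $X$ be a fully open principal $G$-bundle over a locale $M$, with anchor $p:X\to G_0$, action $a:G_1\times_{G_0}X\to X$ and bundle map $\pi:X\to M$. Then $X$ is a principal $Q$-locale over $M$, with the structure $q\cdot x=a_!(q\otimes x)$, $b\triangleright x=p^*(b)\wedge x$ ($b\in A$), inner product $\langle x,y\rangle=\theta_!(x\otimes y)$ where $\theta:X\times_MX\to G_1$ is the map with $\langle\theta,\pi_2\rangle=\langle a,\pi_2\rangle^{-1}$, support $\varsigma_X=p_!$, and $\tilde\varsigma=\pi_!$.
   Context: An open localic groupoid $G$ has locales $G_0,G_1$, domain $d$ (open), range $r$, unit $u$, inverse $i$, multiplication $m$. Its quantale $Q=\mathcal O(G)=\mathcal O(G_1)$ is an involutive quantale (multiplication $m_!$, involution $i^*$), an $A$-$A$-bimodule with $a\triangleright q=d^*(a)\wedge q$, $q\triangleleft a=q\wedge r^*(a)$, with support $\varsigma_Q=d_!$ and $\upsilon=u^*$. A $G$-locale is a locale $X$ with anchor $p:X\to G_0$ and associative unital action $a:G_1\times_{G_0}X\to X$ (pullback of $d$ and $p$, whose frame is $Q\otimes_AX$, the quotient of $Q\otimes X$ by $(q\triangleleft b)\otimes x=q\otimes(b\triangleright x)$), with $p\circ a=r\circ\pi_1$. A principal $G$-bundle over $M$ is a $G$-locale with $\pi:X\to M$, $\pi\circ a=\pi\circ\pi_2$, $\langle a,\pi_2\rangle:G_1\times_{G_0}X\to X\times_MX$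 an isomorphism, $\pi$ an open surjection; fully open if $p$ is an open surjection. A $Q$-module is a locale $X$ with a left $Q$-action $q\cdot x$ and unital left $A$-module structure $b\triangleright x$ with $(b\triangleright q)\cdot x=b\triangleright(q\cdot x)$, $(q\triangleleft b)\cdot x=q\cdot(b\triangleright x)$, $b\triangleright(x\wedge y)=(b\triangleright x)\wedge y$. A pre-Hilbert $Q$-module has $\langle-,-\rangle:X\times X\to Q$ with $\langle q\cdot x,y\rangle=q\langle x,y\rangle$, $b\triangleright\langle x,1_X\rangle=\langle b\triangleright x,1_X\rangle$, $\langle\bigvee x_\alpha,y\rangle=\bigvee\langle x_\alpha,y\rangle$, $\langle x,y\rangle=\langle y,x\rangle^*$. A stably supported $Q$-module has in addition a monotone $\varsigma_X:X\to A$ with $\varsigma_X(1_X)=1_A$, $\varsigma_X(x)\triangleright1_X\le\langle x,x\rangle\cdot1_X$, $\varsigma_X(x)\triangleright x=x$, $\varsigma_X(q\cdot x)\le\varsigma_Q(q)$. A $Q$-locale is a stably supported $Q$-module such that $\alpha_*:X\to Q\otimes_AX$, $\alpha_*(x)=\bigvee_{q\cdot y\le x}q\otimes y$, preserves joins, and $\bigvee_{q\cdot y\le x}\upsilon(q)\triangleright y=x$ for all $x$. A principal $Q$-locale over a locale $M$ is a $Q$-locale $X$ such that (P1) there is an open map of locales $\pi:X\to M$ whose direct image $\tilde\varsigma=\pi_!$ satisfies $\tilde\varsigma(1_X)=1_M$; (P2) $\tilde\varsigma(q\cdot x)=\tilde\varsigma(\varsigma_Q(q^* )\triangleright x)$ for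 all $q,x$; (P3) the map $\varphi:X\otimes_MX\to Q\otimes_AX$, $\varphi(x\otimes y)=\bigvee_{q\cdot z\le x}q\otimes(z\wedge y)$, is a frame isomorphism. *)

(* Defs.v *)
From Stdlib Require Import FunctionalExtensionality PropExtensionality.

Set Implicit Arguments.
Unset Strict Implicit.

Record Frame := MkFrame {
  fcar :> Type;
  le : fcar -> fcar -> Prop;
  sup : (fcar -> Prop) -> fcar;
  meet : fcar -> fcar -> fcar;
  top : fcar;
  le_refl : forall x, le x x;
  le_trans : forall x y z, le x y -> le y z -> le x z;
  le_antisym : forall x y, le x y -> le y x -> x = y;
  sup_ub : forall S x, S x -> le x (sup S);
  sup_least : forall S y, (forall x, S x -> le x y) -> le (sup S) y;
  meet_lb1 : forall x y, le (meet x y) x;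
  meet_lb2 : forall x y, le (meet x y) y;
  meet_glb : forall x y z, le z x -> le z y -> le z (meet x y);
  top_max : forall x, le x top;
  meet_sup_distr : forall a S,
    meet a (sup S) = sup (fun z => exists s, S s /\ z = meet a s)
}.

Arguments le {f} _ _.
Arguments sup {f} _.
Arguments meet {f} _ _.
Arguments top {f}.

Definition inf {F : Frame} (S : F -> Prop) : F :=
  sup (fun z => forall s, S s -> le z s).

Definition img {A B : Type} (f : A -> B) (S : A -> Prop) : B -> Prop :=
  fun y => exists x, S x /\ y = f x.

Record FHom (A B : Frame) := MkFHom {
  fh :> A -> B;
  fh_sup : forall S, fh (sup S) = sup (img fh S);
  fh_meet : forall x y, fh (meet x y) = meet (fh x) (fh y);
  fh_top : fh top = top
}.

Lemma img_comp {A B C : Type} (f : A -> B) (g : B -> C) (S : A -> Prop) :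
  img g (img f S) = img (fun x => g (f x)) S.
Proof.
  apply functional_extensionality; intro z; apply propositional_extensionality.
  unfold img; split.
  - intros [y [[x [Hx ->]] ->]]; eauto.
  - intros [x [Hx ->]]; exists (f x); split; eauto.
Qed.

Definition fh_comp {A B C : Frame} (g : FHom B C) (f : FHom A B) : FHom A C.
Proof.
  refine (@MkFHom A C (fun x => g (f x)) _ _ _).
  - intro S. rewrite (fh_sup f), (fh_sup g). now rewrite img_comp.
  - intros x y. now rewrite (fh_meet f), (fh_meet g).
  - now rewrite (fh_top f), (fh_top g).
Defined.

Lemma img_id {A : Type} (S : A -> Prop) : img (fun x => x) S = S.
Proof.
  apply functional_extensionality; intro z; apply propositional_extensionality.
  unfold img; split; [intros [x [Hx ->]]; exact Hx | intro H; eauto].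
Qed.

Definition fh_id (A : Frame) : FHom A A.
Proof.
  refine (@MkFHom A A (fun x => x) _ _ _); intros; try reflexivity.
  now rewrite img_id.
Defined.

(* Locales and locale maps.  A locale map f : X -> Y is a frame
   homomorphism f^* : O(Y) -> O(X); we identify a locale with its frame. *)

Definition LMap (X Y : Frame) := FHom Y X.

Definition lcomp {X Y Z : Frame} (g : LMap Y Z) (f : LMap X Y) : LMap X Z :=
  fh_comp f g.                              (* (g o f)^* = f^* o g^* *)
Definition lid (X : Frame) : LMap X X := fh_id X.

Definition lmeq {X Y : Frame} (f g : LMap X Y) : Prop := forall y, f y = g y.

(* direct image f_! : the (candidate) left adjoint of f^* *)
Definition lower {X Y : Frame} (f : LMap X Y) (x : X) : Y :=
  inf (fun y => le x (f y)).

Definition is_open {X Y : Frame} (f : LMap X Y) : Prop :=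
  (forall x y, le (lower f x) y <-> le x (f y)) /\
  (forall x y, lower f (meet x (f y)) = meet (lower f x) y).

Definition is_surj {X Y : Frame} (f : LMap X Y) : Prop :=
  forall y y', f y = f y' -> y = y'.

Definition is_open_surj {X Y : Frame} (f : LMap X Y) : Prop :=
  is_open f /\ is_surj f.

Definition frame_iso {A B : Frame} (h : FHom A B) : Prop :=
  exists k : FHom B A, (forall a, k (h a) = a) /\ (forall b, h (k b) = b).

Record Pullback {X Y Z : Frame} (f : LMap X Z) (g : LMap Y Z) := MkPullback {
  pb : Frame;
  pb1 : LMap pb X;
  pb2 : LMap pb Y;
  pb_comm : lmeq (lcomp f pb1) (lcomp g pb2);
  pb_univ : forall (W : Frame) (h : LMap W X) (k : LMap W Y),
    lmeq (lcomp f h) (lcomp g k) ->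
    exists u : LMap W pb,
      lmeq (lcomp pb1 u) h /\ lmeq (lcomp pb2 u) k /\
      (forall v : LMap W pb, lmeq (lcomp pb1 v) h -> lmeq (lcomp pb2 v) k ->
         lmeq v u)
}.

Arguments pb {X Y Z f g} _.
Arguments pb1 {X Y Z f g} _.
Arguments pb2 {X Y Z f g} _.

Definition tens {X Y Z : Frame} {f : LMap X Z} {g : LMap Y Z}
  (P : Pullback f g) (x : X) (y : Y) : pb P :=
  meet (pb1 P x) (pb2 P y).

(* Convention (the one of the groupoid quantale):
   G2 = G1 x_{G0} G1 is the pullback of r and d (pairs (g,h) with
   r(g) = d(h)), and m(g,h) has d(m(g,h)) = d(g), r(m(g,h)) = r(h).
   Axioms are stated with generalized elements W -> G1. *)

Record OpenGroupoid := MkOpenGroupoid {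
  G0 : Frame;
  G1 : Frame;
  gd : LMap G1 G0;
  gr : LMap G1 G0;
  gu : LMap G0 G1;
  gi : LMap G1 G1;
  G2 : Pullback gr gd;
  gm : LMap (pb G2) G1;
  gd_u : lmeq (lcomp gd gu) (lid G0);
  gr_u : lmeq (lcomp gr gu) (lid G0);
  gd_m : lmeq (lcomp gd gm) (lcomp gd (pb1 G2));
  gr_m : lmeq (lcomp gr gm) (lcomp gr (pb2 G2));
  gm_assoc : forall (W : Frame) (g h k : LMap W G1)
      (w12 w23 wl wr : LMap W (pb G2)),
    lmeq (lcomp (pb1 G2) w12) g -> lmeq (lcomp (pb2 G2) w12) h ->
    lmeq (lcomp (pb1 G2) w23) h -> lmeq (lcomp (pb2 G2) w23) k ->
    lmeq (lcomp (pb1 G2) wl) (lcomp gm w12) -> lmeq (lcomp (pb2 G2) wl) k ->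
    lmeq (lcomp (pb1 G2) wr) g -> lmeq (lcomp (pb2 G2) wr) (lcomp gm w23) ->
    lmeq (lcomp gm wl) (lcomp gm wr);
  gm_unit_l : forall (W : Frame) (g : LMap W G1) (w : LMap W (pb G2)),
    lmeq (lcomp (pb1 G2) w) (lcomp gu (lcomp gd g)) ->
    lmeq (lcomp (pb2 G2) w) g -> lmeq (lcomp gm w) g;
  gm_unit_r : forall (W : Frame) (g : LMap W G1) (w : LMap W (pb G2)),
    lmeq (lcomp (pb1 G2) w) g ->
    lmeq (lcomp (pb2 G2) w) (lcomp gu (lcomp gr g)) -> lmeq (lcomp gm w) g;
  gd_i : lmeq (lcomp gd gi) gr;
  gr_i : lmeq (lcomp gr gi) gd;
  gm_inv_r : forall (W : Frame) (g : LMap W G1) (w : LMap W (pb G2)),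
    lmeq (lcomp (pb1 G2) w) g -> lmeq (lcomp (pb2 G2) w) (lcomp gi g) ->
    lmeq (lcomp gm w) (lcomp gu (lcomp gd g));
  gm_inv_l : forall (W : Frame) (g : LMap W G1) (w : LMap W (pb G2)),
    lmeq (lcomp (pb1 G2) w) (lcomp gi g) -> lmeq (lcomp (pb2 G2) w) g ->
    lmeq (lcomp gm w) (lcomp gu (lcomp gr g));
  gd_open : is_open gd
}.

Section Quantale.
Variable G : OpenGroupoid.
Definition qmul (q q' : G1 G) : G1 G := lower (gm G) (tens (G2 G) q q').
Definition qinv (q : G1 G) : G1 G := gi G q.
Definition qlact (b : G0 G) (q : G1 G) : G1 G := meet (gd G b) q.
Definition qract (q : G1 G) (b : G0 G) : G1 G := meet q (gr G b).
Definition qsupp (q : G1 G) : G0 G := lower (gd G) q.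
Definition qups (q : G1 G) : G0 G := gu G q.
End Quantale.

(* G-locales and principal G-bundles.  G1 x_{G0} X is the pullback GX of
   r and p (whose frame is Q (x)_A X), and p o a = d o pi_1. *)

Definition G_locale (G : OpenGroupoid) (X : Frame) (p : LMap X (G0 G))
  (GX : Pullback (gr G) p) (a : LMap (pb GX) X) : Prop :=
  lmeq (lcomp p a) (lcomp (gd G) (pb1 GX)) /\
  (forall (W : Frame) (x : LMap W X) (w : LMap W (pb GX)),
     lmeq (lcomp (pb1 GX) w) (lcomp (gu G) (lcomp p x)) ->
     lmeq (lcomp (pb2 GX) w) x -> lmeq (lcomp a w) x) /\
  (forall (W : Frame) (g h : LMap W (G1 G)) (x : LMap W X)
     (w2 : LMap W (pb (G2 G))) (wh wg wm : LMap W (pb GX)),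
     lmeq (lcomp (pb1 (G2 G)) w2) g -> lmeq (lcomp (pb2 (G2 G)) w2) h ->
     lmeq (lcomp (pb1 GX) wh) h -> lmeq (lcomp (pb2 GX) wh) x ->
     lmeq (lcomp (pb1 GX) wg) g -> lmeq (lcomp (pb2 GX) wg) (lcomp a wh) ->
     lmeq (lcomp (pb1 GX) wm) (lcomp (gm G) w2) -> lmeq (lcomp (pb2 GX) wm) x ->
     lmeq (lcomp a wm) (lcomp a wg)).

Definition principal_bundle (G : OpenGroupoid) (X : Frame) (p : LMap X (G0 G))
  (GX : Pullback (gr G) p) (a : LMap (pb GX) X)
  (M : Frame) (pi : LMap X M) (XX : Pullback pi pi) : Prop :=
  G_locale a /\
  lmeq (lcomp pi a) (lcomp pi (pb2 GX)) /\
  (exists phi : LMap (pb GX) (pb XX),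
     lmeq (lcomp (pb1 XX) phi) a /\ lmeq (lcomp (pb2 XX) phi) (pb2 GX) /\
     exists psi : LMap (pb XX) (pb GX),
       lmeq (lcomp phi psi) (lid (pb XX)) /\ lmeq (lcomp psi phi) (lid (pb GX))) /\
  is_open_surj pi.

Definition fully_open_principal_bundle (G : OpenGroupoid) (X : Frame)
  (p : LMap X (G0 G)) (GX : Pullback (gr G) p) (a : LMap (pb GX) X)
  (M : Frame) (pi : LMap X M) (XX : Pullback pi pi) : Prop :=
  principal_bundle a XX /\ is_open_surj p.

(* QX together with tQX : Q -> X -> QX plays the role of Q (x)_A X and
   q (x) x; XX (the pullback of pi along itself) provides X (x)_M X. *)

Section QLocale.
Variable G : OpenGroupoid.
Variable X : Frame.
Variable act : G1 G -> X -> X.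
Variable lact : G0 G -> X -> X.
Variable inner : X -> X -> G1 G.
Variable supp : X -> G0 G.

Definition Q_module : Prop :=
  (forall S x, act (sup S) x = sup (img (fun q => act q x) S)) /\
  (forall q S, act q (sup S) = sup (img (act q) S)) /\
  (forall q q' x, act (qmul q q') x = act q (act q' x)) /\
  (forall S x, lact (sup S) x = sup (img (fun b => lact b x) S)) /\
  (forall b S, lact b (sup S) = sup (img (lact b) S)) /\
  (forall b c x, lact (meet b c) x = lact b (lact c x)) /\
  (forall x, lact top x = x) /\
  (forall b q x, act (qlact b q) x = lact b (act q x)) /\
  (forall q b x, act (qract q b) x = act q (lact b x)) /\
  (forall b x y, lact b (meet x y) = meet (lact b x) y).

Definition pre_Hilbert_Q_module : Prop :=
  Q_module /\
  (forall q x y, inner (act q x) y = qmul q (inner x y)) /\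
  (forall b x, qlact b (inner x top) = inner (lact b x) top) /\
  (forall S y, inner (sup S) y = sup (img (fun x => inner x y) S)) /\
  (forall x y, inner x y = qinv (inner y x)).

Definition stably_supported_Q_module : Prop :=
  pre_Hilbert_Q_module /\
  (forall x y, le x y -> le (supp x) (supp y)) /\
  supp top = top /\
  (forall x, le (lact (supp x) top) (act (inner x x) top)) /\
  (forall x, lact (supp x) x = x) /\
  (forall q x, le (supp (act q x)) (qsupp q)).

Variable QX : Frame.
Variable tQX : G1 G -> X -> QX.

Definition alpha_star (x : X) : QX :=
  sup (fun t => exists q y, le (act q y) x /\ t = tQX q y).

Definition Q_locale : Prop :=
  stably_supported_Q_module /\
  (forall S, alpha_star (sup S) = sup (img alpha_star S)) /\
  (forall x, sup (fun z => exists q y, le (act q y) x /\ z = lact (qups q) y) = x).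

Definition principal_Q_locale (M : Frame) (pi : LMap X M)
  (XX : Pullback pi pi) : Prop :=
  Q_locale /\
  (* P1 : pi open, with tilde-varsigma = pi_! and pi_!(1) = 1 *)
  (is_open pi /\ lower pi top = top) /\
  (forall q x, lower pi (act q x) = lower pi (lact (qsupp (qinv q)) x)) /\
  (exists Phi : FHom (pb XX) QX, frame_iso Phi /\
     forall x y, Phi (tens XX x y) =
       sup (fun t => exists q z, le (act q z) x /\ t = tQX q (meet z y))).
End QLocale.

(* Main.v *)
Require Import Defs.
From Stdlib Require Import FunctionalExtensionality PropExtensionality ProofIrrelevance ClassicalEpsilon.
Set Implicit Arguments.
Unset Strict Implicit.

Section FrameBasics.
Variable F : Frame.
Implicit Types x y z : F.

Lemma le_eq (x y : F) : x = y -> le x y.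
Proof. intros ->; apply le_refl. Qed.

Lemma meet_comm x y : meet x y = meet y x.
Proof. apply le_antisym; apply meet_glb; auto using meet_lb1, meet_lb2. Qed.

Lemma meet_assoc x y z : meet (meet x y) z = meet x (meet y z).
Proof.
  apply le_antisym; repeat apply meet_glb.
  - eapply le_trans; [apply meet_lb1|apply meet_lb1].
  - eapply le_trans; [apply meet_lb1|apply meet_lb2].
  - apply meet_lb2.
  - apply meet_lb1.
  - eapply le_trans; [apply meet_lb2|apply meet_lb1].
  - eapply le_trans; [apply meet_lb2|apply meet_lb2].
Qed.

Lemma meet_le_eq x y : le x y -> meet x y = x.
Proof. intro H; apply le_antisym; [apply meet_lb1| apply meet_glb; auto using le_refl]. Qed.

Lemma meet_le_eq' x y : le x y -> meet y x = x.
Proof. intro H; rewrite meet_comm; now apply meet_le_eq. Qed.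

Lemma meet_idem x : meet x x = x.
Proof. apply meet_le_eq, le_refl. Qed.

Lemma meet_top_r x : meet x top = x.
Proof. apply meet_le_eq, top_max. Qed.

Lemma meet_top_l x : meet top x = x.
Proof. rewrite meet_comm; apply meet_top_r. Qed.

Lemma meet_mono x x' y y' : le x x' -> le y y' -> le (meet x y) (meet x' y').
Proof.
  intros H1 H2; apply meet_glb.
  - eapply le_trans; [apply meet_lb1|exact H1].
  - eapply le_trans; [apply meet_lb2|exact H2].
Qed.

Lemma meet_le_l x y z : le x z -> le (meet x y) z.
Proof. intro H; eapply le_trans; [apply meet_lb1|exact H]. Qed.
Lemma meet_le_r x y z : le y z -> le (meet x y) z.
Proof. intro H; eapply le_trans; [apply meet_lb2|exact H]. Qed.

Lemma sup_mono (S T : F -> Prop) :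
  (forall x, S x -> exists y, T y /\ le x y) -> le (sup S) (sup T).
Proof.
  intro H; apply sup_least; intros x Hx; destruct (H x Hx) as [y [Hy Hxy]].
  eapply le_trans; [exact Hxy| apply sup_ub; exact Hy].
Qed.

Lemma sup_incl (S T : F -> Prop) :
  (forall x, S x -> T x) -> le (sup S) (sup T).
Proof. intro H; apply sup_mono; intros x Hx; exists x; split; auto using le_refl. Qed.

Lemma le_sup_of x (S : F -> Prop) y : S y -> le x y -> le x (sup S).
Proof. intros H1 H2; eapply le_trans; [exact H2|apply sup_ub; exact H1]. Qed.

Lemma meet_sup_le (a : F) (S : F -> Prop) b :
  (forall s, S s -> le (meet a s) b) -> le (meet a (sup S)) b.
Proof.
  intro H; rewrite meet_sup_distr; apply sup_least; intros z [s [Hs ->]]; auto.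
Qed.

Lemma sup_meet_le (a : F) (S : F -> Prop) b :
  (forall s, S s -> le (meet s a) b) -> le (meet (sup S) a) b.
Proof.
  intro H; rewrite meet_comm; apply meet_sup_le; intros s Hs; rewrite meet_comm; auto.
Qed.

Lemma inf_lb (S : F -> Prop) s : S s -> le (inf S) s.
Proof. intro Hs; unfold inf; apply sup_least; intros z Hz; auto. Qed.

Lemma inf_glb (S : F -> Prop) z : (forall s, S s -> le z s) -> le z (inf S).
Proof. intro H; unfold inf; apply sup_ub; exact H. Qed.

Lemma inf_up (x : F) : inf (fun y => le x y) = x.
Proof.
  apply le_antisym.
  - apply inf_lb, le_refl.
  - apply inf_glb; auto.
Qed.

Lemma sup_single (x : F) : sup (fun z => z = x) = x.
Proof. apply le_antisym. apply sup_least; intros z ->; apply le_refl. apply sup_ub; reflexivity. Qed.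

End FrameBasics.

Definition bot {F : Frame} : F := sup (fun _ => False).
Lemma bot_le {F : Frame} (x : F) : le bot x.
Proof. apply sup_least; intros _ []. Qed.

Section Homs.
Variables A B : Frame.
Variable h : FHom A B.

Lemma fh_mono (x y : A) : le x y -> le (h x) (h y).
Proof.
  intro H. rewrite <- (meet_le_eq H). rewrite fh_meet. apply meet_lb2.
Qed.

Lemma fh_sup_le (S : A -> Prop) b : (forall s, S s -> le (h s) b) -> le (h (sup S)) b.
Proof. intro H; rewrite fh_sup; apply sup_least; intros z [s [Hs ->]]; auto. Qed.

Lemma le_fh_sup (S : A -> Prop) s : S s -> le (h s) (h (sup S)).
Proof. intro Hs; apply fh_mono, sup_ub, Hs. Qed.
End Homs.

Section Open.

Lemma lower_le_of {X Y : Frame} (f : LMap X Y) x y : le x (f y) -> le (lower f x) y.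
Proof. intro H; unfold lower; apply inf_lb; exact H. Qed.

Lemma lower_adj {X Y : Frame} (f : LMap X Y) (Hf : is_open f) x y :
  le (lower f x) y <-> le x (f y).
Proof. apply (proj1 Hf). Qed.

Lemma lower_unit {X Y : Frame} (f : LMap X Y) (Hf : is_open f) x : le x (f (lower f x)).
Proof. apply (lower_adj Hf), le_refl. Qed.

Lemma lower_frob {X Y : Frame} (f : LMap X Y) (Hf : is_open f) x y :
  lower f (meet x (f y)) = meet (lower f x) y.
Proof. apply (proj2 Hf). Qed.

Lemma lower_mono {X Y : Frame} (f : LMap X Y) (Hf : is_open f) x x' :
  le x x' -> le (lower f x) (lower f x').
Proof. intro H; apply (lower_adj Hf); eapply le_trans; [exact H| apply lower_unit; auto]. Qed.

Lemma lower_sup {X Y : Frame} (f : LMap X Y) (Hf : is_open f) (S : X -> Prop) :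
  lower f (sup S) = sup (img (lower f) S).
Proof.
  apply le_antisym.
  - apply (lower_adj Hf). apply sup_least; intros s Hs.
    apply (lower_adj Hf). apply sup_ub; exists s; auto.
  - apply sup_least; intros z [s [Hs ->]]. apply lower_mono; auto. apply sup_ub; auto.
Qed.

Lemma lower_eq_adj {X Y : Frame} (f : LMap X Y) x (L : Y) :
  (forall y, le L y <-> le x (f y)) -> lower f x = L.
Proof.
  intro H. unfold lower.
  replace (fun y => le x (f y)) with (fun y => le L y).
  - apply inf_up.
  - apply functional_extensionality; intro y; apply propositional_extensionality; apply H.
Qed.

Lemma lower_ext {X Y : Frame} (f g : LMap X Y) x : lmeq f g -> lower f x = lower g x.
Proof.
  intro H; unfold lower. f_equal. apply functional_extensionality; intro y.
  rewrite H; reflexivity.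
Qed.

Lemma is_open_ext {X Y : Frame} (f g : LMap X Y) : lmeq f g -> is_open f -> is_open g.
Proof.
  intros H [H1 H2]; split.
  - intros x y. rewrite <- (lower_ext x H), <- H. apply H1.
  - intros x y. rewrite <- !(lower_ext _ H), <- H. apply H2.
Qed.

Lemma open_comp {X Y Z : Frame} (g : LMap Y Z) (f : LMap X Y) :
  is_open f -> is_open g -> is_open (lcomp g f) /\
  (forall x, lower (lcomp g f) x = lower g (lower f x)).
Proof.
  intros Hf Hg.
  assert (E : forall x, lower (lcomp g f) x = lower g (lower f x)).
  { intro x; apply lower_eq_adj; intro z. simpl.
    rewrite (lower_adj Hg), (lower_adj Hf). tauto. }
  split; [|exact E]. split.
  - intros x y. rewrite E. simpl. rewrite (lower_adj Hg), (lower_adj Hf). tauto.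
  - intros x y. rewrite !E. simpl. rewrite (lower_frob Hf), (lower_frob Hg). reflexivity.
Qed.

Lemma open_iso {X Y : Frame} (f : LMap X Y) (f' : LMap Y X) :
  (forall x, f (f' x) = x) -> (forall y, f' (f y) = y) ->
  is_open f /\ (forall x, lower f x = f' x).
Proof.
  intros H1 H2.
  assert (E : forall x, lower f x = f' x).
  { intro x; apply lower_eq_adj; intro y; split; intro H.
    - rewrite <- (H1 x). apply fh_mono, H.
    - rewrite <- (H2 y). apply fh_mono, H. }
  split; [|exact E]; split.
  - intros x y; rewrite E; split; intro H.
    + rewrite <- (H1 x). apply fh_mono, H.
    + rewrite <- (H2 y). apply fh_mono, H.
  - intros x y; rewrite !E, fh_meet, H2; reflexivity.
Qed.

Lemma lower_top_surj {X Y : Frame} (f : LMap X Y) : is_open_surj f -> lower f top = top.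
Proof.
  intros [Ho Hs]. apply Hs. rewrite (fh_top f). apply le_antisym.
  - apply top_max.
  - pose proof (lower_unit Ho top) as H. exact H.
Qed.

End Open.

Lemma meet_swap_r {F : Frame} (x y z : F) : meet (meet x y) z = meet (meet x z) y.
Proof. rewrite !meet_assoc, (meet_comm y z); reflexivity. Qed.

Section Conc.
Variables X Y Z : Frame.
Variable f : LMap X Z.
Variable g : LMap Y Z.

Record sat (D : X -> Y -> Prop) : Prop := {
  s_down : forall x y x' y', D x y -> le x' x -> le y' y -> D x' y';
  s_supl : forall (S : X -> Prop) y, (forall s, S s -> D s y) -> D (sup S) y;
  s_supr : forall x (T : Y -> Prop), (forall t, T t -> D x t) -> D x (sup T);
  s_rel : forall x y z, D (meet x (f z)) y <-> D x (meet (g z) y)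
}.

Definition cl (U : X -> Y -> Prop) : X -> Y -> Prop :=
  fun x y => forall D, sat D -> (forall a b, U a b -> D a b) -> D x y.

Lemma cl_sat U : sat (cl U).
Proof.
  split.
  - intros x y x' y' H H1 H2 D HD HU. eapply (s_down HD); [apply (H D HD HU)|auto|auto].
  - intros S y H D HD HU. apply (s_supl HD). intros s Hs; apply H; auto.
  - intros x T H D HD HU. apply (s_supr HD). intros t Ht; apply H; auto.
  - intros x y z; split; intros H D HD HU; apply (s_rel HD); apply H; auto.
Qed.

Lemma cl_incl (U : X -> Y -> Prop) x y : U x y -> cl U x y.
Proof. intros H D HD HU; auto. Qed.

Lemma cl_least (U D : X -> Y -> Prop) : sat D -> (forall a b, U a b -> D a b) ->
  forall x y, cl U x y -> D x y.
Proof. intros HD HU x y H; apply H; auto. Qed.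

Lemma cl_mono (U V : X -> Y -> Prop) : (forall a b, U a b -> V a b) ->
  forall x y, cl U x y -> cl V x y.
Proof.
  intros H x y Hc. apply (@cl_least U _ (cl_sat V)); auto.
  intros a b Hab; apply cl_incl; auto.
Qed.

Lemma sat_and D E : sat D -> sat E -> sat (fun x y => D x y /\ E x y).
Proof.
  intros HD HE; split.
  - intros x y x' y' [H1 H2] Hx Hy; split; eapply s_down; eauto.
  - intros S y H; split; [apply (s_supl HD)|apply (s_supl HE)]; intros s Hs; apply H; auto.
  - intros x T H; split; [apply (s_supr HD)|apply (s_supr HE)]; intros s Hs; apply H; auto.
  - intros x y z; rewrite (s_rel HD), (s_rel HE); tauto.
Qed.

Lemma sat_true : sat (fun _ _ => True).
Proof. split; auto. intros; tauto. Qed.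

Lemma cl_meet_down (A U : X -> Y -> Prop) :
  (forall x y x' y', A x y -> le x' x -> le y' y -> A x' y') ->
  forall x y, A x y -> cl U x y ->
  cl (fun x y => A x y /\ exists x1 y1, U x1 y1 /\ le x x1 /\ le y y1) x y.
Proof.
  intros HA x y Ha Hc.
  set (V := fun x y => A x y /\ exists x1 y1, U x1 y1 /\ le x x1 /\ le y y1).
  set (B := cl V).
  assert (HB : sat B) by apply cl_sat.
  set (E := fun x y => forall x' y', A x' y' -> B (meet x x') (meet y y')).
  assert (HE : sat E).
  { split.
    - intros x0 y0 x1 y1 H H1 H2 x' y' Ha'. eapply (s_down HB). apply (H x' y' Ha').
      apply meet_mono; auto using le_refl. apply meet_mono; auto using le_refl.
    - intros S y0 H x' y' Ha'. rewrite meet_comm, meet_sup_distr.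
      apply (s_supl HB). intros z [s [Hs ->]]. rewrite (meet_comm x' s). apply H; auto.
    - intros x0 T H x' y' Ha'. rewrite (meet_comm (sup T)), meet_sup_distr.
      apply (s_supr HB). intros z [s [Hs ->]]. rewrite (meet_comm y' s). apply H; auto.
    - intros x0 y0 z; split; intros H x' y' Ha'.
      + rewrite meet_assoc. apply (s_rel HB). rewrite meet_swap_r. apply H; auto.
      + rewrite meet_swap_r. apply (s_rel HB). rewrite <- meet_assoc. apply H; auto. }
  assert (HUE : forall a b, U a b -> E a b).
  { intros a b Hu x' y' Ha'. apply cl_incl. split.
    - eapply HA; [exact Ha'|apply meet_lb2|apply meet_lb2].
    - exists a, b; split; [exact Hu|split; apply meet_lb1]. }
  pose proof (cl_least HE HUE Hc x y Ha) as H. rewrite !meet_idem in H. exact H.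
Qed.

Record CE := MkCE { cs : X -> Y -> Prop; csat : sat cs }.

Lemma CE_ext (A B : CE) : (forall x y, cs A x y <-> cs B x y) -> A = B.
Proof.
  destruct A as [a Ha], B as [b Hb]; simpl; intro H.
  assert (a = b).
  { apply functional_extensionality; intro x; apply functional_extensionality; intro y.
    apply propositional_extensionality; apply H. }
  subst b. f_equal. apply proof_irrelevance.
Qed.

Definition Cle (A B : CE) : Prop := forall x y, cs A x y -> cs B x y.
Definition Csup (S : CE -> Prop) : CE :=
  MkCE (cl_sat (fun x y => exists A, S A /\ cs A x y)).
Definition Cmeet (A B : CE) : CE := MkCE (sat_and (csat A) (csat B)).
Definition Ctop : CE := MkCE sat_true.

Lemma C_distr (A : CE) (S : CE -> Prop) :
  Cmeet A (Csup S) = Csup (fun z => exists s, S s /\ z = Cmeet A s).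
Proof.
  apply CE_ext; intros x y; simpl; split.
  - intros [Ha Hc].
    pose proof (cl_meet_down (s_down (csat A)) Ha Hc) as H.
    revert H; apply cl_mono. intros a b [Ha' [x1 [y1 [[B [HB Hb]] [H1 H2]]]]].
    exists (Cmeet A B); split; [exists B; auto|]. simpl; split; auto.
    eapply (s_down (csat B)); eauto.
  - intro H; split.
    + revert H. apply (cl_least (csat A)). intros a b [B [[s [Hs ->]] [H1 H2]]]; auto.
    + revert H. apply cl_mono. intros a b [B [[s [Hs ->]] [H1 H2]]]. exists s; auto.
Qed.

Definition CFrame : Frame.
Proof.
  refine (@MkFrame CE Cle Csup Cmeet Ctop _ _ _ _ _ _ _ _ _ C_distr).
  - intros A x y H; exact H.
  - intros A B C H1 H2 x y H; auto.
  - intros A B H1 H2; apply CE_ext; split; auto.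
  - intros S A HA x y H. apply cl_incl. exists A; auto.
  - intros S B H x y Hc. revert Hc. apply (cl_least (csat B)).
    intros a b [A [HA Ha]]. apply (H A HA); auto.
  - intros A B x y [H _]; exact H.
  - intros A B x y [_ H]; exact H.
  - intros A B C H1 H2 x y H; split; auto.
  - intros A x y _; exact I.
Defined.

Definition Tset (x0 : X) (y0 : Y) : X -> Y -> Prop := cl (fun a b => le a x0 /\ le b y0).
Definition T (x0 : X) (y0 : Y) : CFrame := MkCE (cl_sat (fun a b => le a x0 /\ le b y0)).

Lemma T_in x y : cs (T x y) x y.
Proof. apply cl_incl; split; apply le_refl. Qed.

Lemma T_least (D : CFrame) x y : cs D x y -> le (T x y) D.
Proof.
  intros H a b Hab. simpl in Hab. revert Hab. apply (cl_least (csat D)).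
  intros a' b' [H1 H2]. eapply (s_down (csat D)); eauto.
Qed.

Lemma T_meet x y x' y' : meet (T x y) (T x' y') = T (meet x x') (meet y y').
Proof.
  apply le_antisym.
  - intros a b [H1 H2]. simpl in H1, H2.
    assert (HA : forall x0 y0 x1 y1, cs (T x' y') x0 y0 -> le x1 x0 -> le y1 y0 -> cs (T x' y') x1 y1)
      by apply (s_down (csat _)).
    pose proof (cl_meet_down HA H2 H1) as H. simpl. revert H.
    apply (cl_least (cl_sat _)). intros a0 b0 [Ha0 [x1 [y1 [[Hx1 Hy1] [Hl1 Hl2]]]]].
    set (A2 := fun (u : X) (v : Y) => le u x /\ le v y).
    assert (HA2 : forall x0 y0 x1 y1, A2 x0 y0 -> le x1 x0 -> le y1 y0 -> A2 x1 y1).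
    { intros u v u' v' [h1 h2] h3 h4; split; eapply le_trans; eauto. }
    assert (Hin : A2 a0 b0) by (split; eapply le_trans; eauto).
    pose proof (cl_meet_down HA2 Hin Ha0) as H. revert H. apply cl_mono.
    intros u v [[h1 h2] [u1 [v1 [[h3 h4] [h5 h6]]]]]. split; apply meet_glb; eauto using le_trans.
  - apply meet_glb; apply T_least; simpl; eapply (s_down (csat (T _ _))); try apply T_in;
      first [apply meet_lb1|apply meet_lb2].
Qed.

Lemma T_sup_l (S : X -> Prop) y : T (sup S) y = sup (img (fun x => T x y) S).
Proof.
  apply le_antisym.
  - apply T_least. simpl. apply (s_supl (cl_sat _)). intros s Hs.
    apply cl_incl. exists (T s y); split; [exists s; auto| apply T_in].
  - apply sup_least; intros z [s [Hs ->]]. apply T_least.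
    eapply (s_down (csat _)); [apply T_in| apply sup_ub; auto | apply le_refl].
Qed.

Lemma T_sup_r x (S : Y -> Prop) : T x (sup S) = sup (img (fun y => T x y) S).
Proof.
  apply le_antisym.
  - apply T_least. simpl. apply (s_supr (cl_sat _)). intros s Hs.
    apply cl_incl. exists (T x s); split; [exists s; auto| apply T_in].
  - apply sup_least; intros z [s [Hs ->]]. apply T_least.
    eapply (s_down (csat _)); [apply T_in| apply le_refl | apply sup_ub; auto].
Qed.

Lemma T_top : T top top = top.
Proof. apply le_antisym. apply top_max. intros a b _. apply cl_incl; split; apply top_max. Qed.

Definition Cpb1 : LMap CFrame X.
Proof.
  refine (@MkFHom X CFrame (fun x => T x top) _ _ _).
  - intro S; apply T_sup_l.
  - intros x y; rewrite T_meet, meet_idem; reflexivity.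
  - apply T_top.
Defined.

Definition Cpb2 : LMap CFrame Y.
Proof.
  refine (@MkFHom Y CFrame (fun y => T top y) _ _ _).
  - intro S; apply T_sup_r.
  - intros x y; rewrite T_meet, meet_idem; reflexivity.
  - apply T_top.
Defined.

Lemma C_tens x y : meet (Cpb1 x) (Cpb2 y) = T x y.
Proof. simpl. rewrite T_meet, meet_top_r, meet_top_l; reflexivity. Qed.

Lemma C_comm : lmeq (lcomp f Cpb1) (lcomp g Cpb2).
Proof.
  intro z; simpl. apply (@le_antisym CFrame); apply T_least.
  - assert (H : cs (T top (g z)) (meet top (f z)) top).
    { apply (proj2 (s_rel (csat _) _ _ _)). rewrite meet_top_r. apply T_in. }
    rewrite meet_top_l in H. exact H.
  - assert (H : cs (T (f z) top) top (meet (g z) top)).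
    { apply (proj1 (s_rel (csat _) _ _ _)). rewrite meet_top_l. apply T_in. }
    rewrite meet_top_r in H. exact H.
Qed.

Lemma C_dense (D : CFrame) : D = sup (fun t => exists x y, cs D x y /\ t = T x y).
Proof.
  apply le_antisym.
  - intros x y H. apply cl_incl. exists (T x y). split; [exists x, y; auto| apply T_in].
  - apply sup_least. intros t [x [y [H ->]]]. apply T_least, H.
Qed.

Section Univ.
Variable W : Frame.
Variable h : LMap W X.
Variable k : LMap W Y.
Hypothesis Hhk : lmeq (lcomp f h) (lcomp g k).

Definition ufun (D : CFrame) : W := sup (fun w => exists x y, cs D x y /\ w = meet (h x) (k y)).

Lemma ufun_mono (D E : CFrame) : le D E -> le (ufun D) (ufun E).
Proof.
  intro H; apply sup_incl. intros w [x [y [Hd ->]]]. exists x, y; split; [apply H, Hd|reflexivity].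
Qed.

Lemma ufun_bound (U : X -> Y -> Prop) (R : W) :
  (forall x y, U x y -> le (meet (h x) (k y)) R) ->
  forall x y, cl U x y -> le (meet (h x) (k y)) R.
Proof.
  intros HU. apply cl_least; auto. split.
  - intros x y x' y' H H1 H2. eapply le_trans; [|exact H]. apply meet_mono; apply fh_mono; auto.
  - intros S y H. rewrite fh_sup. apply sup_meet_le. intros s [x [Hx ->]]. auto.
  - intros x S H. rewrite (fh_sup k). apply meet_sup_le. intros s [x' [Hx ->]]. auto.
  - intros x y z. rewrite fh_meet, (fh_meet k).
    assert (E : h (f z) = k (g z)) by apply Hhk.
    rewrite E, meet_assoc. tauto.
Qed.

Lemma ufun_T x y : ufun (T x y) = meet (h x) (k y).
Proof.
  apply le_antisym.
  - apply sup_least. intros w [a [b [Hab ->]]]. revert a b Hab.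
    apply ufun_bound. intros a b [H1 H2]; apply meet_mono; apply fh_mono; auto.
  - apply sup_ub. exists x, y; split; auto. apply T_in.
Qed.

Definition ufh : FHom CFrame W.
Proof.
  refine (@MkFHom CFrame W ufun _ _ _).
  - intro S. apply le_antisym.
    + apply sup_least. intros w [x [y [Hd ->]]]. revert x y Hd. apply ufun_bound.
      intros x y [A [HA Hxy]]. apply le_sup_of with (ufun A). exists A; auto.
      apply sup_ub. exists x, y; auto.
    + apply sup_least. intros w [A [HA ->]]. apply ufun_mono, sup_ub, HA.
  - intros A B. apply le_antisym.
    + apply meet_glb; apply ufun_mono; [apply meet_lb1|apply meet_lb2].
    + unfold ufun at 1. apply sup_meet_le. intros w [x [y [Hx ->]]].
      apply meet_sup_le. intros w [x' [y' [Hx' ->]]].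
      apply le_sup_of with (meet (h (meet x x')) (k (meet y y'))).
      * exists (meet x x'), (meet y y'); split; auto. split; simpl.
        -- eapply (s_down (csat A)); eauto using meet_lb1.
        -- eapply (s_down (csat B)); eauto using meet_lb2.
      * rewrite !fh_meet. apply meet_glb; apply meet_glb.
        all: first [ apply meet_le_l; apply meet_le_l; apply le_refl
                   | apply meet_le_l; apply meet_le_r; apply le_refl
                   | apply meet_le_r; apply meet_le_l; apply le_refl
                   | apply meet_le_r; apply meet_le_r; apply le_refl ].
  - apply le_antisym; [apply top_max|]. apply sup_ub. exists top, top. split; [exact I|].
    rewrite !fh_top, meet_idem; reflexivity.
Defined.

Lemma ufh_1 : lmeq (lcomp Cpb1 ufh) h.
Proof. intro x; simpl. change (ufun (T x top) = h x). rewrite ufun_T, fh_top, meet_top_r; reflexivity. Qed.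
Lemma ufh_2 : lmeq (lcomp Cpb2 ufh) k.
Proof. intro x; simpl. change (ufun (T top x) = k x). rewrite ufun_T, fh_top, meet_top_l; reflexivity. Qed.

Lemma ufh_uniq (v : LMap W CFrame) : lmeq (lcomp Cpb1 v) h -> lmeq (lcomp Cpb2 v) k -> lmeq v ufh.
Proof.
  intros H1 H2 D.
  assert (HT : forall x y, v (T x y) = ufh (T x y)).
  { intros x y. rewrite <- C_tens, !fh_meet.
    pose proof (H1 x) as e1; pose proof (H2 y) as e2; pose proof (ufh_1 x) as e3;
    pose proof (ufh_2 y) as e4; simpl in e1, e2, e3, e4 |- *. rewrite e1, e2, e3, e4. reflexivity. }
  rewrite (C_dense D). rewrite !fh_sup. f_equal.
  apply functional_extensionality; intro w; apply propositional_extensionality.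
  unfold img. split; intros [t [[x [y [Hxy ->]]] ->]]; exists (T x y); split; eauto.
Qed.
End Univ.

Definition CPB : Pullback f g.
Proof.
  refine (@MkPullback X Y Z f g CFrame Cpb1 Cpb2 C_comm _).
  intros W h k H. exists (ufh H). split; [apply ufh_1|split; [apply ufh_2|]].
  intros v H1 H2. apply ufh_uniq; auto.
Defined.

End Conc.

Lemma lmeq_refl {X Y : Frame} (f : LMap X Y) : lmeq f f.
Proof. intro; reflexivity. Qed.
Lemma lmeq_sym {X Y : Frame} (f g : LMap X Y) : lmeq f g -> lmeq g f.
Proof. intros H y; symmetry; apply H. Qed.
Lemma lmeq_trans {X Y : Frame} (f g h : LMap X Y) : lmeq f g -> lmeq g h -> lmeq f h.
Proof. intros H1 H2 y; rewrite H1; apply H2. Qed.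
Lemma lcomp_congr {X Y Z : Frame} (g g' : LMap Y Z) (f f' : LMap X Y) :
  lmeq g g' -> lmeq f f' -> lmeq (lcomp g f) (lcomp g' f').
Proof. intros H1 H2 y; simpl; rewrite H1; apply H2. Qed.
Lemma lcomp_assoc {X Y Z V : Frame} (h : LMap Z V) (g : LMap Y Z) (f : LMap X Y) :
  lmeq (lcomp h (lcomp g f)) (lcomp (lcomp h g) f).
Proof. intro; reflexivity. Qed.

Section PB.
Variables X Y Z : Frame.
Variable f : LMap X Z.
Variable g : LMap Y Z.
Variable P : Pullback f g.

Definition pair {W : Frame} (h : LMap W X) (k : LMap W Y) (H : lmeq (lcomp f h) (lcomp g k)) :
  LMap W (pb P) := proj1_sig (constructive_indefinite_description _ (pb_univ P H)).

Lemma pair_spec {W : Frame} (h : LMap W X) (k : LMap W Y) (H : lmeq (lcomp f h) (lcomp g k)) :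
  lmeq (lcomp (pb1 P) (pair H)) h /\ lmeq (lcomp (pb2 P) (pair H)) k /\
  (forall v : LMap W (pb P), lmeq (lcomp (pb1 P) v) h -> lmeq (lcomp (pb2 P) v) k ->
         lmeq v (pair H)).
Proof. unfold pair. destruct (constructive_indefinite_description _ _) as [u Hu]; exact Hu. Qed.

Lemma pair_1 {W : Frame} (h : LMap W X) (k : LMap W Y) (H : lmeq (lcomp f h) (lcomp g k)) x :
  pair H (pb1 P x) = h x.
Proof. apply (proj1 (pair_spec H)). Qed.
Lemma pair_2 {W : Frame} (h : LMap W X) (k : LMap W Y) (H : lmeq (lcomp f h) (lcomp g k)) y :
  pair H (pb2 P y) = k y.
Proof. apply (proj1 (proj2 (pair_spec H))). Qed.

Lemma pb_ext {W : Frame} (v v' : LMap W (pb P)) :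
  lmeq (lcomp (pb1 P) v) (lcomp (pb1 P) v') -> lmeq (lcomp (pb2 P) v) (lcomp (pb2 P) v') ->
  lmeq v v'.
Proof.
  intros H1 H2.
  assert (H : lmeq (lcomp f (lcomp (pb1 P) v)) (lcomp g (lcomp (pb2 P) v))).
  { intro z; simpl. pose proof (pb_comm P z) as e; simpl in e. rewrite e; reflexivity. }
  destruct (pair_spec H) as [_ [_ U]].
  eapply lmeq_trans. apply U; apply lmeq_refl.
  apply lmeq_sym, U; apply lmeq_sym; assumption.
Qed.

Lemma pb_ext' {W : Frame} (v v' : LMap W (pb P)) :
  (forall x, v (pb1 P x) = v' (pb1 P x)) -> (forall y, v (pb2 P y) = v' (pb2 P y)) ->
  forall w, v w = v' w.
Proof. intros H1 H2; apply pb_ext; intro; simpl; auto. Qed.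

End PB.
Arguments pair {X Y Z f g} P {W h k} H.
Arguments pair_1 {X Y Z f g} P {W h k} H x.
Arguments pair_2 {X Y Z f g} P {W h k} H y.
Arguments pair_spec {X Y Z f g} P {W h k} H.
Arguments pb_ext {X Y Z f g} P {W} v v'.
Arguments pb_ext' {X Y Z f g} P {W} v v'.
Section PB2.
Variables X Y Z : Frame.
Variable f : LMap X Z.
Variable g : LMap Y Z.
Variable P : Pullback f g.
Definition CP := CPB f g.
Definition tauP : LMap (pb P) (pb CP) := pair CP (pb_comm P).
Definition rhoP : LMap (pb CP) (pb P) := pair P (pb_comm CP).

Lemma rho_pb1 x : rhoP (pb1 P x) = pb1 CP x.
Proof. apply (pair_1 P). Qed.
Lemma rho_pb2 y : rhoP (pb2 P y) = pb2 CP y.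
Proof. apply (pair_2 P). Qed.
Lemma tau_pb1 x : tauP (pb1 CP x) = pb1 P x.
Proof. apply (pair_1 CP). Qed.
Lemma tau_pb2 y : tauP (pb2 CP y) = pb2 P y.
Proof. apply (pair_2 CP). Qed.

Lemma tau_rho w : tauP (rhoP w) = w.
Proof.
  apply (pb_ext' P (lcomp rhoP tauP) (lid (pb P))).
  - intro x; simpl. rewrite rho_pb1. apply tau_pb1.
  - intro x; simpl. rewrite rho_pb2. apply tau_pb2.
Qed.

Lemma rho_tens x y : rhoP (tens P x y) = T f g x y.
Proof. unfold tens. rewrite fh_meet, rho_pb1, rho_pb2. apply C_tens. Qed.
Lemma tau_T x y : tauP (T f g x y) = tens P x y.
Proof. rewrite <- C_tens. rewrite fh_meet, tau_pb1, tau_pb2. reflexivity. Qed.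

Lemma tens_mono x x' y y' : le x x' -> le y y' -> le (tens P x y) (tens P x' y').
Proof. intros; unfold tens; apply meet_mono; apply fh_mono; auto. Qed.

Lemma detect x y (w : pb P) : le (tens P x y) w -> cs (rhoP w) x y.
Proof.
  intro H. apply (fh_mono rhoP) in H. rewrite rho_tens in H. apply H. apply T_in.
Qed.

Lemma dense (w : pb P) : w = sup (fun t => exists x y, t = tens P x y /\ le t w).
Proof.
  apply le_antisym.
  - rewrite <- (tau_rho w) at 1. rewrite (C_dense (rhoP w)). rewrite fh_sup.
    apply sup_mono. intros t [z [[x [y [Hxy ->]]] ->]]. exists (tens P x y).
    split; [|rewrite tau_T; apply le_refl]. exists x, y; split; auto.
    rewrite <- tau_T, <- (tau_rho w). apply fh_mono. apply T_least. exact Hxy.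
  - apply sup_least. intros t [x [y [-> H]]]; exact H.
Qed.

Lemma dense_le (w v : pb P) : (forall x y, le (tens P x y) w -> le (tens P x y) v) -> le w v.
Proof.
  intro H. rewrite (dense w). apply sup_least. intros t [x [y [-> Ht]]]. auto.
Qed.

Lemma tens_sup_l (S : X -> Prop) y : tens P (sup S) y = sup (img (fun x => tens P x y) S).
Proof.
  unfold tens. rewrite fh_sup, meet_comm, meet_sup_distr. f_equal.
  apply functional_extensionality; intro z; apply propositional_extensionality.
  split; [intros [s [[x [Hx ->]] ->]]; exists x; split; auto; apply meet_comm
         |intros [x [Hx ->]]; exists (pb1 P x); split; [exists x; auto| apply meet_comm]].
Qed.

Lemma tens_sup_r x (S : Y -> Prop) : tens P x (sup S) = sup (img (fun y => tens P x y) S).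
Proof.
  unfold tens. rewrite (fh_sup (pb2 P)), meet_sup_distr. f_equal.
  apply functional_extensionality; intro z; apply propositional_extensionality.
  split; [intros [s [[y [Hy ->]] ->]]; exists y; split; auto
         |intros [y [Hy ->]]; exists (pb2 P y); split; [exists y; auto| auto]].
Qed.

Lemma tens_meet x y x' y' : meet (tens P x y) (tens P x' y') = tens P (meet x x') (meet y y').
Proof.
  unfold tens. rewrite !fh_meet. rewrite !meet_assoc. f_equal.
  rewrite <- !meet_assoc. f_equal. apply meet_comm.
Qed.

Section BCsec.
Hypothesis Hf : is_open f.

Definition ell (w : pb P) : Y :=
  sup (fun t => exists x y, le (tens P x y) w /\ t = meet (g (lower f x)) y).

Lemma tens_le_pb2 x y : le (tens P x y) (pb2 P (meet (g (lower f x)) y)).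
Proof.
  unfold tens. rewrite fh_meet. apply meet_mono; [|apply le_refl].
  pose proof (pb_comm P (lower f x)) as e; simpl in e. rewrite <- e.
  apply fh_mono. apply lower_unit; auto.
Qed.

Lemma ell_adj w y0 : le (ell w) y0 <-> le w (pb2 P y0).
Proof.
  split.
  - intro H. apply dense_le. intros x y Hxy. eapply le_trans; [apply tens_le_pb2|].
    apply fh_mono. eapply le_trans; [|exact H]. apply sup_ub. exists x, y; auto.
  - intro H. apply sup_least. intros t [x [y [Hxy ->]]].
    pose proof (detect (le_trans Hxy H)) as D. rewrite rho_pb2 in D.
    change (cs (T f g top y0) x y) in D. clear Hxy.
    revert x y D.
    refine (cl_least (f := f) (g := g) (U := fun a b => le a top /\ le b y0)
      (D := fun a b => le (meet (g (lower f a)) b) y0) _ _).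
    + split.
      * intros a b a' b' Hab H1 H2. eapply le_trans; [|exact Hab].
        apply meet_mono; auto. apply fh_mono, lower_mono; auto.
      * intros S b HS. rewrite lower_sup, fh_sup; auto. apply sup_meet_le.
        intros s [s' [[s0 [Hs0 ->]] ->]]. apply HS; auto.
      * intros a S HS. rewrite meet_sup_distr. apply sup_least. intros s [t [Ht ->]]. auto.
      * intros a b z. rewrite lower_frob, fh_meet, meet_assoc; auto. tauto.
    + intros a b [_ H2]. apply meet_le_r; auto.
Qed.

Lemma BC_lower w : lower (pb2 P) w = ell w.
Proof. apply lower_eq_adj. intro; apply ell_adj. Qed.

Lemma BC_tens x y : lower (pb2 P) (tens P x y) = meet (g (lower f x)) y.
Proof.
  rewrite BC_lower. apply le_antisym.
  - apply ell_adj, tens_le_pb2.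
  - apply sup_ub. exists x, y; split; auto using le_refl.
Qed.

Lemma BC_open : is_open (pb2 P).
Proof.
  split.
  - intros; rewrite BC_lower; apply ell_adj.
  - intros w y. rewrite !BC_lower. apply le_antisym.
    + apply meet_glb.
      * apply ell_adj. eapply le_trans; [apply meet_lb1|]. apply ell_adj, le_refl.
      * apply ell_adj, meet_lb2.
    + unfold ell at 1. apply sup_meet_le. intros t [x [y' [Hxy ->]]].
      apply sup_ub. exists x, (meet y' y). split.
      * unfold tens. rewrite fh_meet, <- meet_assoc. apply meet_mono; auto using le_refl.
      * apply meet_assoc.
Qed.
End BCsec.
End PB2.

Definition pb_swap {X Y Z : Frame} {f : LMap X Z} {g : LMap Y Z} (P : Pullback f g) : Pullback g f.
Proof.
  refine (@MkPullback Y X Z g f (pb P) (pb2 P) (pb1 P) (lmeq_sym (pb_comm P)) _).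
  intros W h k H. destruct (pb_univ P (lmeq_sym H)) as [u [H1 [H2 H3]]].
  exists u; split; [exact H2|split; [exact H1|]]. intros v Hv1 Hv2; apply H3; auto.
Defined.

Lemma BC {X Y Z : Frame} {f : LMap X Z} {g : LMap Y Z} (P : Pullback f g) :
  is_open f -> is_open (pb2 P) /\ forall x y, lower (pb2 P) (tens P x y) = meet (g (lower f x)) y.
Proof. intro Hf; split; [apply BC_open| apply BC_tens]; auto. Qed.

Lemma BC' {X Y Z : Frame} {f : LMap X Z} {g : LMap Y Z} (P : Pullback f g) :
  is_open g -> is_open (pb1 P) /\ forall x y, lower (pb1 P) (tens P x y) = meet x (f (lower g y)).
Proof.
  intro Hg. destruct (BC (pb_swap P) Hg) as [H1 H2]. split; [exact H1|].
  intros x y. pose proof (H2 y x) as e. unfold tens in e |- *. simpl in e.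
  rewrite meet_comm, e, meet_comm. reflexivity.
Qed.

Lemma lm_pw {X Y Z : Frame} (g : LMap Y Z) (f : LMap X Y) (h : LMap X Z) :
  lmeq (lcomp g f) h -> forall y, f (g y) = h y.
Proof. intros H y; apply H. Qed.

Lemma pair_congr {X Y Z : Frame} {f : LMap X Z} {g : LMap Y Z} (P : Pullback f g) {W : Frame}
  (h h' : LMap W X) (k k' : LMap W Y) (H : lmeq (lcomp f h) (lcomp g k))
  (H' : lmeq (lcomp f h') (lcomp g k')) :
  lmeq h h' -> lmeq k k' -> lmeq (pair P H) (pair P H').
Proof.
  intros E1 E2. apply (pb_ext P); intro y; simpl.
  - rewrite (pair_1 P H), (pair_1 P H'). apply E1.
  - rewrite (pair_2 P H), (pair_2 P H'). apply E2.
Qed.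

Lemma pair_comp {X Y Z : Frame} {f : LMap X Z} {g : LMap Y Z} (P : Pullback f g) {W V : Frame}
  (h : LMap W X) (k : LMap W Y) (e : LMap V W) (H : lmeq (lcomp f h) (lcomp g k))
  (H' : lmeq (lcomp f (lcomp h e)) (lcomp g (lcomp k e))) :
  lmeq (lcomp (pair P H) e) (pair P H').
Proof.
  apply (pb_ext P); intro y; simpl.
  - rewrite (pair_1 P H), (pair_1 P H'). reflexivity.
  - rewrite (pair_2 P H), (pair_2 P H'). reflexivity.
Qed.

Section Pasting.
Variables X Y Z Y' : Frame.
Variable f : LMap X Z.
Variable g : LMap Y Z.
Variable P : Pullback f g.
Variable h : LMap Y' Y.
Variable R : Pullback f (lcomp g h).
Variable k : LMap (pb R) (pb P).
Hypothesis Hk1 : lmeq (lcomp (pb1 P) k) (pb1 R).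
Hypothesis Hk2 : lmeq (lcomp (pb2 P) k) (lcomp h (pb2 R)).

Definition paste : Pullback (pb2 P) h.
Proof.
  refine (@MkPullback _ _ _ (pb2 P) h (pb R) k (pb2 R) Hk2 _).
  intros W u v Huv.
  assert (H : lmeq (lcomp f (lcomp (pb1 P) u)) (lcomp (lcomp g h) v)).
  { intro z; simpl. pose proof (pb_comm P z) as e; simpl in e. rewrite e.
    pose proof (Huv (g z)) as e2; simpl in e2. exact e2. }
  exists (pair R H). split; [|split].
  - apply (pb_ext P); intro y; simpl.
    + rewrite (lm_pw Hk1). apply (pair_1 R H).
    + rewrite (lm_pw Hk2). simpl. rewrite (pair_2 R H). symmetry; apply Huv.
  - intro y; apply (pair_2 R H).
  - intros w Hw1 Hw2. apply (pair_spec R H).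
    + intro x; simpl. rewrite <- (lm_pw Hk1). apply Hw1.
    + exact Hw2.
Defined.
End Pasting.
Arguments pair_comp {X Y Z f g} P {W V} h k e H H' _.
Arguments pair_congr {X Y Z f g} P {W} h h' k k' H H' _ _ _.
Lemma pair_1l {X Y Z : Frame} {f : LMap X Z} {g : LMap Y Z} (P : Pullback f g) {W : Frame}
  (h : LMap W X) (k : LMap W Y) (H : lmeq (lcomp f h) (lcomp g k)) :
  lmeq (lcomp (pb1 P) (pair P H)) h.
Proof. apply (pair_spec P H). Qed.
Lemma pair_2l {X Y Z : Frame} {f : LMap X Z} {g : LMap Y Z} (P : Pullback f g) {W : Frame}
  (h : LMap W X) (k : LMap W Y) (H : lmeq (lcomp f h) (lcomp g k)) :
  lmeq (lcomp (pb2 P) (pair P H)) k.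
Proof. apply (pair_spec P H). Qed.
Arguments pair_1l {X Y Z f g} P {W h k} H _.
Arguments pair_2l {X Y Z f g} P {W h k} H _.

Section Grpd.
Variable G : OpenGroupoid.
Notation d := (gd G).
Notation r := (gr G).
Notation u := (gu G).
Notation i := (gi G).
Notation m := (gm G).
Notation P2 := (G2 G).

Lemma E_du y : u (d y) = y. Proof. apply (@gd_u G). Qed.
Lemma E_ru y : u (r y) = y. Proof. apply (@gr_u G). Qed.
Lemma E_dm y : m (d y) = pb1 P2 (d y). Proof. apply (@gd_m G). Qed.
Lemma E_rm y : m (r y) = pb2 P2 (r y). Proof. apply (@gr_m G). Qed.
Lemma E_di y : i (d y) = r y. Proof. apply (@gd_i G). Qed.
Lemma E_ri y : i (r y) = d y. Proof. apply (@gr_i G). Qed.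
Lemma E_c2 y : pb1 P2 (r y) = pb2 P2 (d y). Proof. apply (pb_comm P2). Qed.

Ltac gs := repeat (simpl; rewrite ?E_du, ?E_ru, ?E_dm, ?E_rm, ?E_di, ?E_ri, ?E_c2).

Definition mul {W : Frame} (a b : LMap W (G1 G)) (H : lmeq (lcomp r a) (lcomp d b)) : LMap W (G1 G) :=
  lcomp m (pair P2 H).

Lemma mul_congr {W : Frame} (a a' b b' : LMap W (G1 G)) H H' :
  lmeq a a' -> lmeq b b' -> lmeq (@mul W a b H) (@mul W a' b' H').
Proof. intros E1 E2. unfold mul. apply lcomp_congr; [apply lmeq_refl|]. apply pair_congr; auto. Qed.

Lemma mul_comp {W V : Frame} (a b : LMap W (G1 G)) (e : LMap V W) H H' :
  lmeq (lcomp (@mul W a b H) e) (@mul V (lcomp a e) (lcomp b e) H').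
Proof. unfold mul. intro y. simpl. apply (pair_comp P2 a b e H H'). Qed.

Lemma mul_d {W : Frame} (a b : LMap W (G1 G)) H : lmeq (lcomp d (@mul W a b H)) (lcomp d a).
Proof. intro y; unfold mul; simpl. rewrite E_dm. apply (pair_1 P2). Qed.

Lemma mul_r {W : Frame} (a b : LMap W (G1 G)) H : lmeq (lcomp r (@mul W a b H)) (lcomp r b).
Proof. intro y; unfold mul; simpl. rewrite E_rm. apply (pair_2 P2). Qed.

Lemma mul_assoc {W : Frame} (a b c : LMap W (G1 G)) H12 H23 H1 H2 :
  lmeq (@mul W (@mul W a b H12) c H1) (@mul W a (@mul W b c H23) H2).
Proof.
  unfold mul at 1 3.
  apply (gm_assoc (g := a) (h := b) (k := c) (w12 := pair P2 H12) (w23 := pair P2 H23));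
    first [apply (pair_1l P2) | apply (pair_2l P2)].
Qed.

Lemma unit_l {W : Frame} (a : LMap W (G1 G)) H :
  lmeq (@mul W (lcomp u (lcomp d a)) a H) a.
Proof. apply gm_unit_l; first [apply (pair_1l P2) | apply (pair_2l P2)]. Qed.
Lemma unit_r {W : Frame} (a : LMap W (G1 G)) H :
  lmeq (@mul W a (lcomp u (lcomp r a)) H) a.
Proof. apply gm_unit_r; first [apply (pair_1l P2) | apply (pair_2l P2)]. Qed.
Lemma inv_r {W : Frame} (a : LMap W (G1 G)) H :
  lmeq (@mul W a (lcomp i a) H) (lcomp u (lcomp d a)).
Proof. apply gm_inv_r; first [apply (pair_1l P2) | apply (pair_2l P2)]. Qed.
Lemma inv_l {W : Frame} (a : LMap W (G1 G)) H :
  lmeq (@mul W (lcomp i a) a H) (lcomp u (lcomp r a)).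
Proof. apply gm_inv_l; first [apply (pair_1l P2) | apply (pair_2l P2)]. Qed.

Lemma ii y : i (i y) = y.
Proof.
  set (g := lid (G1 G)).
  set (h := lcomp i g).
  assert (H0 : lmeq (lcomp r (lcomp u (lcomp d g))) (lcomp d g)) by (intro z; gs; reflexivity).
  pose proof (unit_l H0) as E0.
  assert (Ha : lmeq (lcomp r (lcomp i h)) (lcomp d h)) by (intro z; gs; reflexivity).
  assert (Hb : lmeq (lcomp r (@mul _ (lcomp i h) h Ha)) (lcomp d g)).
  { eapply lmeq_trans; [apply mul_r|]. intro z; gs; reflexivity. }
  assert (E1 : lmeq (@mul _ (@mul _ (lcomp i h) h Ha) g Hb) g).
  { eapply lmeq_trans; [|exact E0]. apply mul_congr; [|apply lmeq_refl].
    eapply lmeq_trans; [apply inv_l|]. intro z; gs; reflexivity. }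
  assert (Hc : lmeq (lcomp r h) (lcomp d g)) by (intro z; gs; reflexivity).
  assert (Hd : lmeq (lcomp r (lcomp i h)) (lcomp d (@mul _ h g Hc))).
  { eapply lmeq_trans; [|apply lmeq_sym, mul_d]. intro z; gs; reflexivity. }
  pose proof (mul_assoc Hb Hd) as E2.
  assert (He : lmeq (lcomp r (lcomp i h)) (lcomp d (lcomp u (lcomp r g)))) by (intro z; gs; reflexivity).
  assert (E3 : lmeq (@mul _ (lcomp i h) (@mul _ h g Hc) Hd) (@mul _ (lcomp i h) (lcomp u (lcomp r g)) He)).
  { apply mul_congr; [apply lmeq_refl|]. apply (inv_l (a := g)). }
  assert (Hf : lmeq (lcomp r (lcomp i h)) (lcomp d (lcomp u (lcomp r (lcomp i h))))) by (intro z; gs; reflexivity).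
  assert (E4 : lmeq (@mul _ (lcomp i h) (lcomp u (lcomp r g)) He) (lcomp i h)).
  { eapply lmeq_trans; [|apply (unit_r Hf)]. apply mul_congr; [apply lmeq_refl|]. intro z; gs; reflexivity. }
  pose proof (lmeq_trans (lmeq_sym E1) (lmeq_trans E2 (lmeq_trans E3 E4)) y) as E.
  simpl in E. symmetry; exact E.
Qed.

Lemma i_open : is_open i /\ forall q, lower i q = i q.
Proof. apply open_iso; intro; apply ii. Qed.

Lemma r_open : is_open r /\ forall q, lower r q = lower d (i q).
Proof.
  assert (E : lmeq (lcomp d i) r) by apply (@gd_i G).
  destruct i_open as [Hio Hil].
  destruct (open_comp (g := d) Hio (@gd_open G)) as [H1 H2].
  split.
  - eapply is_open_ext; [exact E| exact H1].
  - intro q. rewrite <- (lower_ext q E), H2, Hil. reflexivity.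
Qed.

Definition P2' := CPB d d.

Lemma m_open : is_open m.
Proof.
  assert (Hk : lmeq (lcomp d (pb1 P2)) (lcomp d m)) by (intro z; gs; reflexivity).
  set (kap := pair P2' Hk).
  assert (H1 : lmeq (lcomp r (lcomp i (pb1 P2'))) (lcomp d (pb2 P2'))).
  { intro z; gs. apply (pb_comm P2'). }
  set (c := @mul _ (lcomp i (pb1 P2')) (pb2 P2') H1).
  assert (H2 : lmeq (lcomp r (pb1 P2')) (lcomp d c)).
  { eapply lmeq_trans; [|apply lmeq_sym, mul_d]. intro z; gs; reflexivity. }
  set (kap' := pair P2 H2).
  assert (EA : forall y, kap (kap' y) = y).
  { apply (pb_ext' P2 (lcomp kap' kap) (lid _)).
    - intro x; simpl. unfold kap'. rewrite (pair_1 P2). unfold kap. apply (pair_1 P2').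
    - intro x. change (kap (kap' (pb2 P2 x)) = pb2 P2 x).
      unfold kap'. rewrite (pair_2 P2). unfold c.
      assert (H3 : lmeq (lcomp r (lcomp (lcomp i (pb1 P2')) kap)) (lcomp d (lcomp (pb2 P2') kap))).
      { intro z; simpl. pose proof (H1 z) as e; simpl in e. rewrite e. reflexivity. }
      change ((lcomp c kap) x = pb2 P2 x).
      assert (E1 : lmeq (lcomp (lcomp i (pb1 P2')) kap) (lcomp i (pb1 P2))).
      { intro z; simpl. unfold kap. apply (pair_1 P2'). }
      assert (E2 : lmeq (lcomp (pb2 P2') kap) m).
      { intro z; simpl. unfold kap. apply (pair_2 P2'). }
      set (g := pb1 P2). set (h := pb2 P2).
      assert (Hgh : lmeq (lcomp r g) (lcomp d h)) by (intro z; apply (pb_comm P2)).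
      assert (Hm : lmeq m (@mul _ g h Hgh)).
      { intro z. unfold mul. simpl. f_equal. symmetry.
        apply (pb_ext' P2 (pair P2 Hgh) (lid _)); intro; [apply (pair_1 P2)|apply (pair_2 P2)]. }
      assert (Ha : lmeq (lcomp r (lcomp i g)) (lcomp d g)) by (intro z; gs; reflexivity).
      assert (Hb : lmeq (lcomp r (@mul _ (lcomp i g) g Ha)) (lcomp d h)).
      { eapply lmeq_trans; [apply mul_r|]. exact Hgh. }
      assert (Hd : lmeq (lcomp r (lcomp i g)) (lcomp d (@mul _ g h Hgh))).
      { eapply lmeq_trans; [|apply lmeq_sym, mul_d]. intro z; gs; reflexivity. }
      assert (Hu : lmeq (lcomp r (lcomp u (lcomp d h))) (lcomp d h)) by (intro z; gs; reflexivity).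
      pose proof (mul_assoc Hb Hd) as A.
      assert (B : lmeq (@mul _ (@mul _ (lcomp i g) g Ha) h Hb) (@mul _ (lcomp u (lcomp d h)) h Hu)).
      { apply mul_congr; [|apply lmeq_refl]. eapply lmeq_trans; [apply inv_l|].
        intro z; exact (Hgh (u z)). }
      pose proof (unit_l Hu) as C.
      assert (F : lmeq (@mul _ (lcomp (lcomp i (pb1 P2')) kap) (lcomp (pb2 P2') kap) H3)
                       (@mul _ (lcomp i g) (@mul _ g h Hgh) Hd)).
      { apply mul_congr; [exact E1| eapply lmeq_trans; [exact E2|exact Hm]]. }
      exact (lmeq_trans (mul_comp (e := kap) H1 H3)
               (lmeq_trans F (lmeq_trans (lmeq_sym A) (lmeq_trans B C))) x). }
  assert (EB : forall y, kap' (kap y) = y).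
  { apply (pb_ext' P2' (lcomp kap kap') (lid _)).
    - intro x. change (kap' (kap (pb1 P2' x)) = pb1 P2' x). unfold kap. rewrite (pair_1 P2'). unfold kap'. apply (pair_1 P2).
    - intro x. change (kap' (kap (pb2 P2' x)) = pb2 P2' x).
      unfold kap. rewrite (pair_2 P2').
      set (g := pb1 P2'). set (k := pb2 P2').
      assert (Em : lmeq (lcomp m kap') (@mul _ g c H2)) by (intro; reflexivity).
      change ((lcomp m kap') x = pb2 P2' x).
      assert (Hgi : lmeq (lcomp r g) (lcomp d (lcomp i g))) by (intro z; gs; reflexivity).
      assert (Hb : lmeq (lcomp r (@mul _ g (lcomp i g) Hgi)) (lcomp d k)).
      { eapply lmeq_trans; [apply mul_r|]. intro z; gs. apply (pb_comm P2'). }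
      pose proof (mul_assoc Hb H2) as A.
      assert (Hu : lmeq (lcomp r (lcomp u (lcomp d k))) (lcomp d k)) by (intro z; gs; reflexivity).
      assert (B : lmeq (@mul _ (@mul _ g (lcomp i g) Hgi) k Hb) (@mul _ (lcomp u (lcomp d k)) k Hu)).
      { apply mul_congr; [|apply lmeq_refl]. eapply lmeq_trans; [apply inv_r|].
        intro z; exact (pb_comm P2' (u z)). }
      pose proof (unit_l Hu) as C.
      exact (lmeq_trans Em (lmeq_trans (lmeq_sym A) (lmeq_trans B C)) x). }
  destruct (open_iso (f := kap) (f' := kap') EA EB) as [Hko _].
  destruct (BC P2' (@gd_open G)) as [Hp2 _].
  destruct (open_comp Hko Hp2) as [Ho _].
  eapply is_open_ext; [|exact Ho]. intro z; simpl. unfold kap. apply (pair_2 P2').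
Qed.

End Grpd.

Section Main.
Variable G : OpenGroupoid.
Variables X M : Frame.
Variable p : LMap X (G0 G).
Variable GX : Pullback (gr G) p.
Variable a : LMap (pb GX) X.
Variable pi : LMap X M.
Variable XX : Pullback pi pi.
Variable theta : LMap (pb XX) (G1 G).
Variable psi : LMap (pb XX) (pb GX).
Variable phi : LMap (pb GX) (pb XX).
Hypothesis Hpsi1 : lmeq (lcomp (pb1 GX) psi) theta.
Hypothesis Hpsi2 : lmeq (lcomp (pb2 GX) psi) (pb2 XX).
Hypothesis Hphi1 : lmeq (lcomp (pb1 XX) phi) a.
Hypothesis Hphi2 : lmeq (lcomp (pb2 XX) phi) (pb2 GX).
Hypothesis Hinv1 : lmeq (lcomp phi psi) (lid (pb XX)).
Hypothesis Hinv2 : lmeq (lcomp psi phi) (lid (pb GX)).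
Hypothesis HGl : G_locale a.
Hypothesis Hpa : lmeq (lcomp pi a) (lcomp pi (pb2 GX)).
Hypothesis Hpio : is_open_surj pi.
Hypothesis Hpo : is_open_surj p.

Notation d := (gd G).
Notation r := (gr G).
Notation u := (gu G).
Notation i := (gi G).
Notation m := (gm G).
Notation P2 := (G2 G).

Lemma Ep1 q : psi (pb1 GX q) = theta q. Proof. apply Hpsi1. Qed.
Lemma Ep2 z : psi (pb2 GX z) = pb2 XX z. Proof. apply Hpsi2. Qed.
Lemma Eh1 z : phi (pb1 XX z) = a z. Proof. apply Hphi1. Qed.
Lemma Eh2 z : phi (pb2 XX z) = pb2 GX z. Proof. apply Hphi2. Qed.
Lemma Ei1 w : psi (phi w) = w. Proof. apply Hinv1. Qed.
Lemma Ei2 w : phi (psi w) = w. Proof. apply Hinv2. Qed.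
Lemma Epad b : a (p b) = pb1 GX (d b). Proof. apply (proj1 HGl). Qed.
Lemma Epa z : a (pi z) = pb2 GX (pi z). Proof. apply Hpa. Qed.
Lemma EcGX y : pb1 GX (r y) = pb2 GX (p y). Proof. apply (pb_comm GX). Qed.
Lemma EcXX y : pb1 XX (pi y) = pb2 XX (pi y). Proof. apply (pb_comm XX). Qed.

Lemma pi_open : is_open pi. Proof. apply Hpio. Qed.
Lemma p_open : is_open p. Proof. apply Hpo. Qed.

Lemma phi_open : is_open phi /\ forall v, lower phi v = psi v.
Proof. apply open_iso; [apply Ei2|apply Ei1]. Qed.
Lemma psi_open : is_open psi /\ forall w, lower psi w = phi w.
Proof. apply open_iso; [apply Ei1|apply Ei2]. Qed.

Lemma a_open : is_open a /\ forall v, lower a v = lower (pb1 XX) (psi v).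
Proof.
  destruct (BC' XX pi_open) as [H1 _]. destruct phi_open as [H2 H3].
  destruct (open_comp H2 H1) as [H4 H5]. split.
  - eapply is_open_ext; [exact Hphi1| exact H4].
  - intro v. rewrite <- (lower_ext v Hphi1), H5, H3. reflexivity.
Qed.

Lemma theta_open : is_open theta /\ forall w, lower theta w = lower (pb1 GX) (phi w).
Proof.
  destruct (BC' GX p_open) as [H1 _]. destruct psi_open as [H2 H3].
  destruct (open_comp H2 H1) as [H4 H5]. split.
  - eapply is_open_ext; [exact Hpsi1| exact H4].
  - intro v. rewrite <- (lower_ext v Hpsi1), H5, H3. reflexivity.
Qed.

Lemma Ao : is_open a. Proof. apply a_open. Qed.
Lemma To : is_open theta. Proof. apply theta_open. Qed.

Lemma Etd b : theta (d b) = pb1 XX (p b).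
Proof. rewrite <- Ep1, <- Epad, <- Eh1, Ei1. reflexivity. Qed.
Lemma Etr b : theta (r b) = pb2 XX (p b).
Proof. rewrite <- Ep1, EcGX, Ep2. reflexivity. Qed.
Lemma Eapsi z : psi (a z) = pb1 XX z.
Proof. rewrite <- Eh1, Ei1. reflexivity. Qed.

Lemma Hsw : lmeq (lcomp pi (pb2 XX)) (lcomp pi (pb1 XX)).
Proof. apply lmeq_sym, (pb_comm XX). Qed.
Definition sw : LMap (pb XX) (pb XX) := pair XX Hsw.
Lemma sw1 z : sw (pb1 XX z) = pb2 XX z. Proof. exact (pair_1 XX Hsw z). Qed.
Lemma sw2 z : sw (pb2 XX z) = pb1 XX z. Proof. exact (pair_2 XX Hsw z). Qed.
Lemma swsw v : sw (sw v) = v.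
Proof.
  apply (pb_ext' XX (lcomp sw sw) (lid _)); intro z; simpl.
  - rewrite sw1, sw2; reflexivity.
  - rewrite sw2, sw1; reflexivity.
Qed.

Lemma Hw0 : lmeq (lcomp r (lcomp i theta)) (lcomp p (pb1 XX)).
Proof. intro b; simpl. rewrite E_ri, Etd. reflexivity. Qed.
Definition wsw : LMap (pb XX) (pb GX) := pair GX Hw0.
Lemma wsw1 q : wsw (pb1 GX q) = theta (i q). Proof. exact (pair_1 GX Hw0 q). Qed.
Lemma wsw2 z : wsw (pb2 GX z) = pb1 XX z. Proof. exact (pair_2 GX Hw0 z). Qed.

Lemma Hw2 : lmeq (lcomp r (lcomp i theta)) (lcomp d theta).
Proof. intro b; simpl. rewrite E_ri. reflexivity. Qed.
Definition w2s : LMap (pb XX) (pb P2) := pair P2 Hw2.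
Lemma Hwm : lmeq (lcomp r (lcomp m w2s)) (lcomp p (pb2 XX)).
Proof. intro b; simpl. rewrite E_rm. unfold w2s. rewrite (pair_2 P2 Hw2). simpl. apply Etr. Qed.
Definition wms : LMap (pb XX) (pb GX) := pair GX Hwm.

Lemma claimA z : wsw (a z) = pb2 XX z.
Proof.
  assert (E1 : lmeq (lcomp a wms) (lcomp a wsw)).
  { apply (proj2 (proj2 HGl) (pb XX) (lcomp i theta) theta (pb2 XX) w2s psi wsw wms).
    - apply (pair_1l P2).
    - apply (pair_2l P2).
    - exact Hpsi1.
    - exact Hpsi2.
    - apply (pair_1l GX).
    - intro z0; simpl. rewrite wsw2, Eapsi. reflexivity.
    - apply (pair_1l GX).
    - apply (pair_2l GX). }
  assert (E2 : lmeq (lcomp a wms) (pb2 XX)).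
  { apply (proj1 (proj2 HGl) (pb XX) (pb2 XX) wms).
    - intro b. simpl. unfold wms. rewrite (pair_1 GX Hwm). simpl.
      pose proof (inv_l (a := theta) Hw2 b) as e. simpl in e. unfold mul in e. simpl in e.
      unfold w2s. rewrite e. apply Etr.
    - apply (pair_2l GX). }
  transitivity ((lcomp a wms) z); [symmetry; apply E1| apply E2].
Qed.

Lemma claimB v : wsw (phi v) = sw v.
Proof.
  apply (pb_ext' XX (lcomp phi wsw) sw); intro z; simpl.
  - rewrite Eh1, claimA, sw1. reflexivity.
  - rewrite Eh2, wsw2, sw2. reflexivity.
Qed.

Lemma claimC : lmeq (lcomp theta sw) (lcomp i theta).
Proof. intro q; simpl. rewrite <- Ep1, <- claimB, Ei2, wsw1. reflexivity. Qed.

Lemma inner_sym' x y : lower theta (tens XX x y) = i (lower theta (tens XX y x)).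
Proof.
  destruct (open_iso (f := sw) (f' := sw) swsw swsw) as [Hso Hsl].
  destruct (open_comp Hso To) as [_ H1].
  destruct (i_open G) as [Hio Hil].
  destruct (open_comp To Hio) as [_ H2].
  replace (tens XX x y) with (sw (tens XX y x)).
  - rewrite <- Hsl, <- H1, (lower_ext _ claimC), H2, Hil. reflexivity.
  - unfold tens. rewrite fh_meet, sw1, sw2. apply meet_comm.
Qed.

Section Assoc.
Variable T : Pullback r (lcomp p a).
Notation Tg := (pb1 T).
Notation Tv := (pb2 T).
Lemma EcT b : Tg (r b) = Tv (a (p b)). Proof. apply (pb_comm T). Qed.

Lemma Hk : lmeq (lcomp r Tg) (lcomp p (lcomp a Tv)).
Proof. intro b; apply EcT. Qed.
Definition kA : LMap (pb T) (pb GX) := pair GX Hk.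
Lemma kA1 q : kA (pb1 GX q) = Tg q. Proof. exact (pair_1 GX Hk q). Qed.
Lemma kA2 z : kA (pb2 GX z) = Tv (a z). Proof. exact (pair_2 GX Hk z). Qed.
Lemma Hk1 : lmeq (lcomp (pb1 GX) kA) (pb1 T). Proof. apply (pair_1l GX). Qed.
Lemma Hk2 : lmeq (lcomp (pb2 GX) kA) (lcomp a (pb2 T)). Proof. apply (pair_2l GX). Qed.
Definition R1 : Pullback (pb2 GX) a := paste Hk1 Hk2.
Lemma R1_1 : pb1 R1 = kA. Proof. reflexivity. Qed.
Lemma R1_2 : pb2 R1 = Tv. Proof. reflexivity. Qed.

Lemma He : lmeq (lcomp r Tg) (lcomp d (lcomp (pb1 GX) Tv)).
Proof. intro b; simpl. rewrite EcT, Epad. reflexivity. Qed.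
Definition eT : LMap (pb T) (pb P2) := pair P2 He.
Lemma eT1 q : eT (pb1 P2 q) = Tg q. Proof. exact (pair_1 P2 He q). Qed.
Lemma eT2 q : eT (pb2 P2 q) = Tv (pb1 GX q). Proof. exact (pair_2 P2 He q). Qed.
Lemma Hmx : lmeq (lcomp r (lcomp m eT)) (lcomp p (lcomp (pb2 GX) Tv)).
Proof. intro b; simpl. rewrite E_rm, eT2, EcGX. reflexivity. Qed.
Definition mx : LMap (pb T) (pb GX) := pair GX Hmx.
Lemma mx1 q : mx (pb1 GX q) = eT (m q). Proof. exact (pair_1 GX Hmx q). Qed.
Lemma mx2 z : mx (pb2 GX z) = Tv (pb2 GX z). Proof. exact (pair_2 GX Hmx z). Qed.

Lemma R2comm : lmeq (lcomp m eT) (lcomp (pb1 GX) mx).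
Proof. intro q; simpl. rewrite mx1. reflexivity. Qed.

Definition R2 : Pullback m (pb1 GX).
Proof.
  refine (@MkPullback _ _ _ m (pb1 GX) (pb T) eT mx R2comm _).
  intros W ee v H.
  assert (E0 : forall q, ee (m q) = v (pb1 GX q)) by (intro q; apply H).
  assert (H1 : lmeq (lcomp r (lcomp (pb2 P2) ee)) (lcomp p (lcomp (pb2 GX) v))).
  { intro b; simpl. rewrite <- E_rm, E0, EcGX. reflexivity. }
  set (vv := pair GX H1).
  assert (vv1 : forall q, vv (pb1 GX q) = ee (pb2 P2 q)) by (intro; apply (pair_1 GX H1)).
  assert (vv2 : forall z, vv (pb2 GX z) = v (pb2 GX z)) by (intro; apply (pair_2 GX H1)).
  assert (H2 : lmeq (lcomp r (lcomp (pb1 P2) ee)) (lcomp (lcomp p a) vv)).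
  { intro b; simpl. rewrite Epad, vv1, E_c2. reflexivity. }
  set (tt := pair T H2).
  assert (tt1 : forall q, tt (Tg q) = ee (pb1 P2 q)) by (intro; apply (pair_1 T H2)).
  assert (tt2 : forall w, tt (Tv w) = vv w) by (intro; apply (pair_2 T H2)).
  assert (F1 : lmeq (lcomp eT tt) ee).
  { apply (pb_ext P2); intro q; simpl.
    - rewrite eT1, tt1. reflexivity.
    - rewrite eT2, tt2, vv1. reflexivity. }
  assert (F2 : lmeq (lcomp mx tt) v).
  { apply (pb_ext GX); intro q; simpl.
    - rewrite mx1. transitivity (ee (m q)); [apply (F1 (m q))|apply E0].
    - rewrite mx2, tt2, vv2. reflexivity. }
  exists tt. split; [exact F1|split; [exact F2|]].
  intros t' G1' G2'.
  apply (pb_ext T); intro q; simpl.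
  - rewrite <- eT1. transitivity (ee (pb1 P2 q)); [apply (G1' (pb1 P2 q))|rewrite eT1, tt1; reflexivity].
  - apply (pb_ext' GX (lcomp Tv t') (lcomp Tv tt)); intro z; simpl.
    + rewrite tt2, vv1, <- eT2. apply (G1' (pb2 P2 z)).
    + rewrite tt2, vv2, <- mx2. apply (G2' (pb2 GX z)).
Defined.
Lemma R2_1 : pb1 R2 = eT. Proof. reflexivity. Qed.
Lemma R2_2 : pb2 R2 = mx. Proof. reflexivity. Qed.

Lemma amx : lmeq (lcomp a mx) (lcomp a kA).
Proof.
  apply (proj2 (proj2 HGl) (pb T) Tg (lcomp (pb1 GX) Tv) (lcomp (pb2 GX) Tv) eT Tv kA mx).
  - apply (pair_1l P2).
  - apply (pair_2l P2).
  - apply lmeq_refl.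
  - apply lmeq_refl.
  - apply (pair_1l GX).
  - apply (pair_2l GX).
  - apply (pair_1l GX).
  - apply (pair_2l GX).
Qed.

Lemma act_assoc_T q q' x :
  lower a (tens GX (qmul q q') x) = lower a (tens GX q (lower a (tens GX q' x))).
Proof.
  destruct (BC R2 (m_open G)) as [Hmo Hmt].
  destruct (BC' R1 Ao) as [Hko Hkt].
  rewrite R2_2 in Hmo, Hmt. rewrite R1_1 in Hko, Hkt.
  assert (E1 : tens GX (qmul q q') x = lower mx (tens R2 (tens P2 q q') (pb2 GX x))).
  { rewrite Hmt. reflexivity. }
  assert (E2 : tens R2 (tens P2 q q') (pb2 GX x) = tens R1 (pb1 GX q) (tens GX q' x)).
  { unfold tens. rewrite R2_1, R2_2, R1_1, R1_2. rewrite !fh_meet, eT1, eT2, mx2, kA1.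
    apply meet_assoc. }
  rewrite E1, E2.
  destruct (open_comp Hmo Ao) as [_ H1].
  destruct (open_comp Hko Ao) as [_ H2].
  rewrite <- H1, (lower_ext _ amx), H2, Hkt. reflexivity.
Qed.
End Assoc.

Ltac lb := first [ apply le_refl | apply meet_le_l; lb | apply meet_le_r; lb ].
Ltac ac := apply le_antisym; repeat apply meet_glb; lb.

Section InnerAct.
Variable T2 : Pullback (lcomp pi a) pi.
Notation t1 := (pb1 T2).
Notation t2 := (pb2 T2).
Lemma EcT2 c : t1 (a (pi c)) = t2 (pi c). Proof. apply (pb_comm T2). Qed.

Lemma Hk2' : lmeq (lcomp pi (lcomp a t1)) (lcomp pi t2).
Proof. intro c; apply EcT2. Qed.
Definition k2 : LMap (pb T2) (pb XX) := pair XX Hk2'.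
Lemma k21 z : k2 (pb1 XX z) = t1 (a z). Proof. exact (pair_1 XX Hk2' z). Qed.
Lemma k22 z : k2 (pb2 XX z) = t2 z. Proof. exact (pair_2 XX Hk2' z). Qed.
Lemma HA1 : lmeq (lcomp (pb1 (pb_swap XX)) k2) (pb1 (pb_swap T2)). Proof. apply (pair_2l XX). Qed.
Lemma HA2 : lmeq (lcomp (pb2 (pb_swap XX)) k2) (lcomp a (pb2 (pb_swap T2))). Proof. apply (pair_1l XX). Qed.
Definition RA : Pullback (pb1 XX) a := @paste X X M (pb GX) pi pi (pb_swap XX) a (pb_swap T2) k2 HA1 HA2.
Lemma RA_1 : pb1 RA = k2. Proof. reflexivity. Qed.
Lemma RA_2 : pb2 RA = t1. Proof. reflexivity. Qed.

Lemma Hka : lmeq (lcomp pi (lcomp (pb2 GX) t1)) (lcomp pi t2).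
Proof. intro c; simpl. rewrite <- Epa. apply EcT2. Qed.
Definition ka : LMap (pb T2) (pb XX) := pair XX Hka.
Lemma ka1 z : ka (pb1 XX z) = t1 (pb2 GX z). Proof. exact (pair_1 XX Hka z). Qed.
Lemma ka2 z : ka (pb2 XX z) = t2 z. Proof. exact (pair_2 XX Hka z). Qed.
Lemma Hbe : lmeq (lcomp r (lcomp (pb1 GX) t1)) (lcomp d (lcomp theta ka)).
Proof. intro b; simpl. rewrite EcGX, Etd, ka1. reflexivity. Qed.
Definition be : LMap (pb T2) (pb P2) := pair P2 Hbe.
Lemma be1 q : be (pb1 P2 q) = t1 (pb1 GX q). Proof. exact (pair_1 P2 Hbe q). Qed.
Lemma be2 q : be (pb2 P2 q) = ka (theta q). Proof. exact (pair_2 P2 Hbe q). Qed.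

Lemma RBcomm : lmeq (lcomp theta ka) (lcomp (pb2 P2) be).
Proof. intro q; simpl. rewrite be2. reflexivity. Qed.

Definition RB : Pullback theta (pb2 P2).
Proof.
  refine (@MkPullback _ _ _ theta (pb2 P2) (pb T2) ka be RBcomm _).
  intros W xy gk H.
  assert (E0 : forall q, xy (theta q) = gk (pb2 P2 q)) by (intro q; apply H).
  assert (H1 : lmeq (lcomp r (lcomp (pb1 P2) gk)) (lcomp p (lcomp (pb1 XX) xy))).
  { intro b; simpl. rewrite E_c2, <- E0, Etd. reflexivity. }
  set (gx := pair GX H1).
  assert (gx1 : forall q, gx (pb1 GX q) = gk (pb1 P2 q)) by (intro; apply (pair_1 GX H1)).
  assert (gx2 : forall z, gx (pb2 GX z) = xy (pb1 XX z)) by (intro; apply (pair_2 GX H1)).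
  assert (H2 : lmeq (lcomp (lcomp pi a) gx) (lcomp pi (lcomp (pb2 XX) xy))).
  { intro c; simpl. rewrite Epa, gx2, EcXX. reflexivity. }
  set (tt := pair T2 H2).
  assert (tt1 : forall w, tt (t1 w) = gx w) by (intro; apply (pair_1 T2 H2)).
  assert (tt2 : forall z, tt (t2 z) = xy (pb2 XX z)) by (intro; apply (pair_2 T2 H2)).
  assert (F1 : lmeq (lcomp ka tt) xy).
  { apply (pb_ext XX); intro z; simpl.
    - rewrite ka1, tt1, gx2. reflexivity.
    - rewrite ka2, tt2. reflexivity. }
  assert (F2 : lmeq (lcomp be tt) gk).
  { apply (pb_ext P2); intro q; simpl.
    - rewrite be1, tt1, gx1. reflexivity.
    - rewrite be2. transitivity (xy (theta q)); [apply (F1 (theta q))|apply E0]. }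
  exists tt. split; [exact F1|split; [exact F2|]].
  intros t' G1' G2'.
  apply (pb_ext T2); intro q; simpl.
  - apply (pb_ext' GX (lcomp t1 t') (lcomp t1 tt)); intro z; simpl.
    + rewrite tt1, gx1, <- be1. apply (G2' (pb1 P2 z)).
    + rewrite tt1, gx2, <- ka1. apply (G1' (pb1 XX z)).
  - rewrite tt2, <- ka2. apply (G1' (pb2 XX q)).
Defined.
Lemma RB_1 : pb1 RB = ka. Proof. reflexivity. Qed.
Lemma RB_2 : pb2 RB = be. Proof. reflexivity. Qed.

Lemma Hc : lmeq (lcomp r (lcomp m be)) (lcomp p t2).
Proof. intro b; simpl. rewrite E_rm, be2, Etr, ka2. reflexivity. Qed.
Definition wc : LMap (pb T2) (pb GX) := pair GX Hc.
Lemma wc1 q : wc (pb1 GX q) = be (m q). Proof. exact (pair_1 GX Hc q). Qed.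
Lemma wc2 z : wc (pb2 GX z) = t2 z. Proof. exact (pair_2 GX Hc z). Qed.

Lemma claimA2 : lmeq (lcomp a wc) (lcomp a t1).
Proof.
  apply (proj2 (proj2 HGl) (pb T2) (lcomp (pb1 GX) t1) (lcomp theta ka) t2 be (lcomp psi ka) t1 wc).
  - apply (pair_1l P2).
  - apply (pair_2l P2).
  - intro q; simpl. rewrite Ep1. reflexivity.
  - intro z; simpl. rewrite Ep2, ka2. reflexivity.
  - apply lmeq_refl.
  - intro z; simpl. rewrite Eapsi, ka1. reflexivity.
  - apply (pair_1l GX).
  - apply (pair_2l GX).
Qed.

Lemma claimB2 v : wc (phi v) = k2 v.
Proof.
  apply (pb_ext' XX (lcomp phi wc) k2); intro z; simpl.
  - rewrite Eh1, k21. apply claimA2.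
  - rewrite Eh2, wc2, k22. reflexivity.
Qed.

Lemma claimC2 : lmeq (lcomp theta k2) (lcomp m be).
Proof. intro q; simpl. rewrite <- Ep1, <- claimB2, Ei2, wc1. reflexivity. Qed.

Lemma inner_act_T q x y :
  lower theta (tens XX (lower a (tens GX q x)) y) = qmul q (lower theta (tens XX x y)).
Proof.
  destruct (BC' RA Ao) as [Hko Hkt].
  destruct (BC RB To) as [Hbo Hbt].
  rewrite RA_1 in Hko, Hkt. rewrite RB_2 in Hbo, Hbt.
  assert (E1 : tens XX (lower a (tens GX q x)) y = lower k2 (tens RA (pb2 XX y) (tens GX q x))).
  { rewrite Hkt. unfold tens at 1. apply meet_comm. }
  assert (E2 : tens RA (pb2 XX y) (tens GX q x) = tens RB (tens XX x y) (pb1 P2 q)).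
  { unfold tens. rewrite RA_1, RA_2, RB_1, RB_2. rewrite !fh_meet, k22, ka1, ka2, be1. ac. }
  rewrite E1, E2.
  destruct (open_comp Hko To) as [_ H1].
  destruct (open_comp Hbo (m_open G)) as [_ H2].
  rewrite <- H1, (lower_ext _ claimC2), H2, Hbt. unfold qmul, tens at 2. rewrite meet_comm. reflexivity.
Qed.
End InnerAct.

Definition act (q : G1 G) (x : X) : X := lower a (tens GX q x).
Definition lact (b : G0 G) (x : X) : X := meet (p b) x.
Definition inner (x y : X) : G1 G := lower theta (tens XX x y).

Lemma img_sup_meet {A F : Frame} (h : A -> F) (S : A -> Prop) (x : F) :
  meet (sup (img h S)) x = sup (img (fun s => meet (h s) x) S).
Proof.
  rewrite meet_comm, meet_sup_distr. f_equal.
  apply functional_extensionality; intro z; apply propositional_extensionality.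
  split.
  - intros [t [[s [Hs ->]] ->]]. exists s; split; auto. apply meet_comm.
  - intros [s [Hs ->]]. exists (h s); split; [exists s; auto| apply meet_comm].
Qed.

Lemma act_assoc : forall q q' x, act (qmul q q') x = act q (act q' x).
Proof. intros; unfold act; apply (act_assoc_T (CPB r (lcomp p a))). Qed.
Lemma inner_act : forall q x y, inner (act q x) y = qmul q (inner x y).
Proof. intros; unfold act, inner; apply (inner_act_T (CPB (lcomp pi a) pi)). Qed.
Lemma inner_sym : forall x y, inner x y = qinv (inner y x).
Proof. intros; unfold inner, qinv; apply inner_sym'. Qed.

Lemma QM : Q_module act lact.
Proof.
  unfold Q_module. split; [|split; [|split; [|split; [|split; [|split; [|split; [|split; [|split]]]]]]]].
  - intros S x. unfold act. rewrite tens_sup_l, lower_sup by apply Ao. rewrite img_comp. reflexivity.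
  - intros q S. unfold act. rewrite tens_sup_r, lower_sup by apply Ao. rewrite img_comp. reflexivity.
  - apply act_assoc.
  - intros S x. unfold lact. rewrite fh_sup, img_sup_meet. reflexivity.
  - intros b S. unfold lact. apply meet_sup_distr.
  - intros b c x. unfold lact. rewrite fh_meet, meet_assoc. reflexivity.
  - intro x. unfold lact. rewrite fh_top, meet_top_l. reflexivity.
  - intros b q x. unfold act, lact, qlact. 
    replace (tens GX (meet (d b) q) x) with (meet (tens GX q x) (a (p b))).
    + rewrite lower_frob by apply Ao. apply meet_comm.
    + unfold tens. rewrite Epad, fh_meet. rewrite meet_comm, meet_assoc. reflexivity.
  - intros q b x. unfold act, lact, qract. f_equal. unfold tens.
    rewrite !fh_meet, EcGX, !meet_assoc. reflexivity.
  - intros b x y. unfold lact. rewrite meet_assoc. reflexivity.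
Qed.

Lemma PH : pre_Hilbert_Q_module act lact inner.
Proof.
  split; [exact QM|]. split; [exact inner_act|]. split; [|split; [|exact inner_sym]].
  - intros b x. unfold qlact, inner, lact.
    replace (tens XX (meet (p b) x) top) with (meet (tens XX x top) (theta (d b))).
    + rewrite lower_frob by apply To. apply meet_comm.
    + unfold tens. rewrite Etd, fh_meet. rewrite meet_comm, meet_assoc. reflexivity.
  - intros S y. unfold inner. rewrite tens_sup_l, lower_sup by apply To. rewrite img_comp. reflexivity.
Qed.

Lemma Hs0 : lmeq (lcomp r (lcomp u p)) (lcomp p (lid X)).
Proof. intro z; simpl. rewrite E_ru. reflexivity. Qed.
Definition sec : LMap X (pb GX) := pair GX Hs0.
Lemma sec1 q : sec (pb1 GX q) = p (u q). Proof. exact (pair_1 GX Hs0 q). Qed.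
Lemma sec2 z : sec (pb2 GX z) = z. Proof. exact (pair_2 GX Hs0 z). Qed.
Lemma sec_a z : sec (a z) = z.
Proof.
  apply (proj1 (proj2 HGl) X (lid X) sec).
  - intro y; simpl. apply sec1.
  - intro y; simpl. apply sec2.
Qed.
Lemma sec_tens q z : sec (tens GX q z) = meet (p (u q)) z.
Proof. unfold tens. rewrite fh_meet, sec1, sec2. reflexivity. Qed.

Lemma sec_le_lower w : le (sec w) (lower a w).
Proof. rewrite <- (sec_a (lower a w)). apply fh_mono, lower_unit, Ao. Qed.

Definition diag : LMap X (pb XX) := pair XX (lmeq_refl (lcomp pi (lid X))).
Lemma diag1 z : diag (pb1 XX z) = z. Proof. exact (pair_1 XX _ z). Qed.
Lemma diag2 z : diag (pb2 XX z) = z. Proof. exact (pair_2 XX _ z). Qed.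

Lemma diag_phi w : sec (phi w) = diag w.
Proof.
  apply (pb_ext' XX (lcomp phi sec) diag).
  - intro z; simpl. rewrite Eh1, sec_a, diag1. reflexivity.
  - intro z; simpl. rewrite Eh2, sec2, diag2. reflexivity.
Qed.

Lemma diag_theta q : diag (theta q) = p (u q).
Proof. rewrite <- Ep1, <- diag_phi, Ei2, sec1. reflexivity. Qed.

Lemma stab x : le (lact (lower p x) top) (act (inner x x) top).
Proof.
  unfold lact, act. rewrite meet_top_r.
  eapply le_trans; [|apply sec_le_lower]. rewrite sec_tens, meet_top_r.
  apply fh_mono. apply (lower_adj p_open). rewrite <- diag_theta.
  eapply le_trans; [|apply fh_mono; apply lower_unit; apply To].
  unfold tens. rewrite fh_meet, diag1, diag2, meet_idem. apply le_refl.
Qed.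

Lemma SS : stably_supported_Q_module act lact inner (lower p).
Proof.
  split; [exact PH|]. split; [|split; [|split; [exact stab|split]]].
  - intros x y H. apply lower_mono; auto. apply p_open.
  - apply lower_top_surj, Hpo.
  - intro x. unfold lact. apply meet_le_eq'. apply lower_unit, p_open.
  - intros q x. unfold act, qsupp.
    assert (E : lmeq (lcomp d (pb1 GX)) (lcomp p a)) by (apply lmeq_sym, (proj1 HGl)).
    destruct (open_comp Ao p_open) as [_ H1].
    destruct (BC' GX p_open) as [Hb1 Hb2].
    destruct (open_comp Hb1 (@gd_open G)) as [_ H2].
    rewrite <- H1, <- (lower_ext _ E), H2, Hb2. apply lower_mono; [apply (@gd_open G)|apply meet_lb1].
Qed.

Lemma alpha_eq x : alpha_star act (tens GX) x = a x.
Proof.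
  unfold alpha_star. rewrite (dense (a x)). f_equal.
  apply functional_extensionality; intro t; apply propositional_extensionality.
  split.
  - intros [q [y [H ->]]]. exists q, y; split; auto. apply (lower_adj Ao), H.
  - intros [q [y [-> H]]]. exists q, y; split; auto. apply (lower_adj Ao), H.
Qed.

Lemma QL : Q_locale act lact inner (lower p) (tens GX).
Proof.
  split; [exact SS|split].
  - intro S. rewrite alpha_eq, fh_sup. f_equal.
    apply functional_extensionality; intro t; apply propositional_extensionality.
    split; intros [s [Hs ->]]; exists s; split; auto; first [apply alpha_eq | symmetry; apply alpha_eq].
  - intro x. apply le_antisym.
    + apply sup_least. intros z [q [y [H ->]]]. unfold lact, qups.
      rewrite <- sec_tens, <- (sec_a x). apply fh_mono, (lower_adj Ao), H.
    + rewrite <- (sec_a x) at 1. rewrite (dense (a x)), fh_sup. apply sup_least.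
      intros z [t [[q [y [-> H]]] ->]]. apply sup_ub. exists q, y. split.
      * apply (lower_adj Ao), H.
      * apply sec_tens.
Qed.

Lemma PQL : principal_Q_locale act lact inner (lower p) (tens GX) XX.
Proof.
  split; [exact QL|split; [|split]].
  - split; [apply pi_open| apply lower_top_surj, Hpio].
  - intros q x. unfold act, lact, qsupp, qinv.
    destruct (open_comp Ao pi_open) as [_ H1].
    destruct (r_open G) as [Hro Hrl].
    destruct (BC GX Hro) as [Hb1 Hb2].
    destruct (open_comp Hb1 pi_open) as [_ H2].
    rewrite <- H1, (lower_ext _ Hpa), H2, Hb2, Hrl. reflexivity.
  - exists phi. split.
    + exists psi. split; [apply Ei1|apply Ei2].
    + intros x y.
      assert (E : forall q w, tens GX q (meet w y) = meet (pb2 GX y) (tens GX q w)).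
      { intros q w. unfold tens. rewrite fh_meet. rewrite (meet_comm (pb2 GX y)), meet_assoc. reflexivity. }
      unfold tens at 1. rewrite fh_meet, Eh1, Eh2.
      rewrite (dense (a x)), meet_comm, meet_sup_distr. apply le_antisym.
      * apply sup_least. intros z [t [[q [w [-> H]]] ->]]. apply sup_ub. exists q, w. split.
        -- apply (lower_adj Ao), H.
        -- symmetry; apply E.
      * apply sup_least. intros z [q [w [H ->]]]. apply sup_ub. exists (tens GX q w). split.
        -- exists q, w; split; auto. apply (lower_adj Ao), H.
        -- apply E.
Qed.
End Main.

Theorem theorem5p4 (G : OpenGroupoid) (X M : Frame) (p : LMap X (G0 G))
  (GX : Pullback (gr G) p) (a : LMap (pb GX) X) (pi : LMap X M)
  (XX : Pullback pi pi)
  (Hbundle : fully_open_principal_bundle a XX)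
  (theta : LMap (pb XX) (G1 G)) (psi : LMap (pb XX) (pb GX))
  (Hpsi1 : lmeq (lcomp (pb1 GX) psi) theta)
  (Hpsi2 : lmeq (lcomp (pb2 GX) psi) (pb2 XX))
  (Hpsi_inv : forall phi : LMap (pb GX) (pb XX),
     lmeq (lcomp (pb1 XX) phi) a -> lmeq (lcomp (pb2 XX) phi) (pb2 GX) ->
     lmeq (lcomp phi psi) (lid (pb XX)) /\ lmeq (lcomp psi phi) (lid (pb GX))) :
  principal_Q_locale
    (fun q x => lower a (tens GX q x))
    (fun b x => meet (p b) x)
    (fun x y => lower theta (tens XX x y))
    (lower p)
    (tens GX)
    XX.
Proof.
  destruct Hbundle as [[HGl [Hpa [[phi [Hphi1 [Hphi2 _]]] Hpio]]] Hpo].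
  destruct (Hpsi_inv phi Hphi1 Hphi2) as [Hinv1 Hinv2].
  exact (PQL Hpsi1 Hpsi2 Hphi1 Hphi2 Hinv1 Hinv2 HGl Hpa Hpio Hpo).
Qed.
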